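(* Let $\mathbf{v}(\mathbf{x},t)$ be a smooth velocity field on a domain in $\mathbb{R}^3$, let $\mathbf{x}(t)$, $t\in[t_0,t_1]$, be a trajectory ($\dot{\mathbf{x}}=\mathbf{v}(\mathbf{x},t)$), and for $\tau,t\in[t_0,t_1]$ let $\mathbf{F}_\tau^t$ be the deformation gradient along it, i.e. the solution of $\dot{\mathbf{F}}_\tau^t=\nabla\mathbf{v}(\mathbf{x}(t),t)\mathbf{F}_\tau^t$, $\mathbf{F}_\tau^\tau=\mathbf{I}$. Then: (i) $\mathbf{F}_\tau^t$ admits a unique decomposition $\mathbf{F}_\tau^t=\mathbf{O}_\tau^t\mathbf{M}_\tau^t=\mathbf{N}_\tau^t\mathbf{O}_\tau^t$ in which $\mathbf{O}_\tau^t$ is a rotational linear process, $\mathbf{M}_\tau^t$ is an irrotational family, and $(\mathbf{N}_\tau^t)^T$ is irrotational as a function of $\tau$ (i.e. $[\frac{d}{d\tau}(\mathbf{N}_\tau^t)^T][(\mathbf{N}_\tau^t)^T]^{-1}$ is symmetric). (ii) $\mathbf{M}_\tau^t$ and $\mathbf{N}_\tau^t=(\mathbf{M}_t^\tau)^{-1}$ are nonsingular, have the same singular values as $\mathbf{F}_\tau^t$, and satisfy $(\mathbf{M}_\tau^t)^T\mathbf{M}_\tau^t=(\mathbf{F}_\tau^t)^T\mathbf{F}_\tau^t$ and $\mathbf{N}_\tau^t(\mathbf{N}_\tau^t)^T=\mathbf{F}_\tau^t(\mathbf{F}_\tau^t)^T$ (so they share the principal strain values and axes of the polar stretch tensors).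 (iii) The factors are the unique solutions of $$\dot{\mathbf{O}}_\tau^t=\mathbf{W}(\mathbf{x}(t),t)\mathbf{O}_\tau^t,\ \mathbf{O}_\tau^\tau=\mathbf{I};\qquad \dot{\mathbf{M}}_\tau^t=\big[\mathbf{O}_t^\tau\mathbf{D}(\mathbf{x}(t),t)\mathbf{O}_\tau^t\big]\mathbf{M}_\tau^t,\ \mathbf{M}_\tau^\tau=\mathbf{I};$$ $$\frac{d}{d\tau}(\mathbf{N}_\tau^t)^T=-\big[\mathbf{O}_\tau^t\mathbf{D}(\mathbf{x}(\tau),\tau)\mathbf{O}_t^\tau\big](\mathbf{N}_\tau^t)^T,\ (\mathbf{N}_t^t)^T=\mathbf{I}.$$
   Context: $\mathbf{W}=\frac12[\nabla\mathbf{v}-(\nabla\mathbf{v})^T]$ (spin tensor) and $\mathbf{D}=\frac12[\nabla\mathbf{v}+(\nabla\mathbf{v})^T]$ (rate-of-strain tensor). A linear process is a $C^1$ two-parameter family $\mathbf{T}_\tau^t$ of linear maps with $\mathbf{T}_t^t=\mathbf{I}$ and $\mathbf{T}_\tau^t=\mathbf{T}_s^t\mathbf{T}_\tau^s$ for all $\tau,s,t$. A smooth two-parameter family $\mathbf{T}_\tau^t$ is rotational if $\dot{\mathbf{T}}_\tau^t(\mathbf{T}_\tau^t)^{-1}$ is skew-symmetric for all $\tau,t$ (equivalently $\mathbf{T}_\tau^t\in SO(3)$), and irrotational if $\dot{\mathbf{T}}_\tau^t(\mathbf{T}_\tau^t)^{-1}$ is symmetric for all $\tau,t$; the dot denotes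 $\partial/\partial t$. Also $\mathbf{O}_t^\tau=(\mathbf{O}_\tau^t)^{-1}=(\mathbf{O}_\tau^t)^T$. *)

(* Defs.v *)
From Stdlib Require Import Reals.
Open Scope R_scope.

Inductive I3 : Type := i0 | i1 | i2.

Definition I3_eqb (a b : I3) : bool :=
  match a, b with
  | i0, i0 | i1, i1 | i2, i2 => true
  | _, _ => false
  end.

Definition Vec := I3 -> R.
Definition Mat := I3 -> I3 -> R.

Definition vshift (y : Vec) (j : I3) (h : R) : Vec :=
  fun k => if I3_eqb k j then y k + h else y k.

Definition mI : Mat := fun i j => if I3_eqb i j then 1 else 0.
Definition mmul (A B : Mat) : Mat :=
  fun i j => A i i0 * B i0 j + A i i1 * B i1 j + A i i2 * B i2 j.
Definition mtr (A : Mat) : Mat := fun i j => A j i.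
Definition madd (A B : Mat) : Mat := fun i j => A i j + B i j.
Definition mopp (A : Mat) : Mat := fun i j => - A i j.
Definition mscal (c : R) (A : Mat) : Mat := fun i j => c * A i j.

Definition mdet (A : Mat) : R :=
    A i0 i0 * (A i1 i1 * A i2 i2 - A i1 i2 * A i2 i1)
  - A i0 i1 * (A i1 i0 * A i2 i2 - A i1 i2 * A i2 i0)
  + A i0 i2 * (A i1 i0 * A i2 i1 - A i1 i1 * A i2 i0).

Definition is_inverse (A B : Mat) : Prop := mmul A B = mI /\ mmul B A = mI.
Definition nonsingular (A : Mat) : Prop := exists B, is_inverse A B.

Definition skew (A : Mat) : Prop := mtr A = mopp A.
Definition symm (A : Mat) : Prop := mtr A = A.

Definition spin (L : Mat) : Mat := mscal (1/2) (madd L (mopp (mtr L))).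
Definition strain_rate (L : Mat) : Mat := mscal (1/2) (madd L (mtr L)).

(* Singular values of A = nonnegative square roots of the eigenvalues (with
   multiplicity) of A^T A; two matrices have the same singular values iff
   A^T A and B^T B have the same characteristic polynomial. *)
Definition same_singular_values (A B : Mat) : Prop :=
  forall lam : R,
    mdet (madd (mscal lam mI) (mopp (mmul (mtr A) A)))
    = mdet (madd (mscal lam mI) (mopp (mmul (mtr B) B))).

Definition open_vec (U : Vec -> Prop) : Prop :=
  forall y, U y -> exists r, 0 < r /\
    forall z, (forall k, Rabs (z k - y k) < r) -> U z.

Definition cont_at (U : Vec -> Prop) (f : Vec -> R -> R) (y : Vec) (s : R) : Prop :=
  forall eps, 0 < eps -> exists del, 0 < del /\
    forall z s', U z -> (forall k, Rabs (z k - y k) < del) -> Rabs (s' - s) < del ->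
      Rabs (f z s' - f y s) < eps.

(* partial derivative: Some j = d/dx_j, None = d/dt *)
Definition partial_at (k : option I3) (f g : Vec -> R -> R) (y : Vec) (s : R) : Prop :=
  match k with
  | Some j => derivable_pt_lim (fun h => f (vshift y j h) s) 0 (g y s)
  | None => derivable_pt_lim (fun s' => f y s') s (g y s)
  end.

(* C^infinity on U x R: continuous, and every first partial exists and is again
   C^infinity (coinductively). *)
CoInductive smooth_on (U : Vec -> Prop) (f : Vec -> R -> R) : Prop :=
  smooth_intro :
    (forall y s, U y -> cont_at U f y s) ->
    (forall k : option I3, exists g : Vec -> R -> R,
        (forall y s, U y -> partial_at k f g y s) /\ smooth_on U g) ->
    smooth_on U f.

Definition inI (t0 t1 s : R) : Prop := t0 <= s <= t1.

(* derivative within [t0,t1] (one-sided at the endpoints) *)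
Definition deriv_in (t0 t1 : R) (f : R -> R) (t l : R) : Prop :=
  limit1_in (fun s => (f s - f t) / (s - t)) (fun s => inI t0 t1 s /\ s <> t) l t.

(* A two-parameter family T tau t = T_tau^t *)
Definition Fam := R -> R -> Mat.

Definition dt_is (t0 t1 : R) (T : Fam) (tau t : R) (A : Mat) : Prop :=
  forall i j, deriv_in t0 t1 (fun s => T tau s i j) t (A i j).
Definition dtau_is (t0 t1 : R) (T : Fam) (tau t : R) (A : Mat) : Prop :=
  forall i j, deriv_in t0 t1 (fun s => T s t i j) tau (A i j).

Definition cont2 (t0 t1 : R) (g : R -> R -> R) : Prop :=
  forall a b, inI t0 t1 a -> inI t0 t1 b ->
  forall eps, 0 < eps -> exists del, 0 < del /\
    forall a' b', inI t0 t1 a' -> inI t0 t1 b' ->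
      Rabs (a' - a) < del -> Rabs (b' - b) < del -> Rabs (g a' b' - g a b) < eps.

Definition C1_family (t0 t1 : R) (T : Fam) : Prop :=
  exists Dt Dtau : Fam,
    (forall tau t, inI t0 t1 tau -> inI t0 t1 t ->
        dt_is t0 t1 T tau t (Dt tau t) /\ dtau_is t0 t1 T tau t (Dtau tau t)) /\
    (forall i j, cont2 t0 t1 (fun a b => T a b i j) /\
                 cont2 t0 t1 (fun a b => Dt a b i j) /\
                 cont2 t0 t1 (fun a b => Dtau a b i j)).

Definition linear_process (t0 t1 : R) (T : Fam) : Prop :=
  C1_family t0 t1 T /\
  (forall s, inI t0 t1 s -> T s s = mI) /\
  (forall tau s t, inI t0 t1 tau -> inI t0 t1 s -> inI t0 t1 t ->
     T tau t = mmul (T s t) (T tau s)).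

Definition rotational (t0 t1 : R) (T : Fam) : Prop :=
  C1_family t0 t1 T /\
  forall tau t, inI t0 t1 tau -> inI t0 t1 t ->
    exists A Ti, dt_is t0 t1 T tau t A /\ is_inverse (T tau t) Ti /\ skew (mmul A Ti).

Definition irrotational (t0 t1 : R) (T : Fam) : Prop :=
  C1_family t0 t1 T /\
  forall tau t, inI t0 t1 tau -> inI t0 t1 t ->
    exists A Ti, dt_is t0 t1 T tau t A /\ is_inverse (T tau t) Ti /\ symm (mmul A Ti).

Definition irrotational_tau (t0 t1 : R) (T : Fam) : Prop :=
  C1_family t0 t1 T /\
  forall tau t, inI t0 t1 tau -> inI t0 t1 t ->
    exists A Ti, dtau_is t0 t1 T tau t A /\ is_inverse (T tau t) Ti /\ symm (mmul A Ti).

Definition famT (N : Fam) : Fam := fun tau t => mtr (N tau t).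

Definition fam_eq (t0 t1 : R) (T S : Fam) : Prop :=
  forall tau t, inI t0 t1 tau -> inI t0 t1 t -> T tau t = S tau t.

(* the three ODE characterisations of part (iii), with L t = grad v (x(t),t) *)
Definition O_ode (t0 t1 : R) (L : R -> Mat) (O : Fam) : Prop :=
  (forall tau, inI t0 t1 tau -> O tau tau = mI) /\
  (forall tau t, inI t0 t1 tau -> inI t0 t1 t ->
     dt_is t0 t1 O tau t (mmul (spin (L t)) (O tau t))).

Definition M_ode (t0 t1 : R) (L : R -> Mat) (O M : Fam) : Prop :=
  (forall tau, inI t0 t1 tau -> M tau tau = mI) /\
  (forall tau t, inI t0 t1 tau -> inI t0 t1 t ->
     dt_is t0 t1 M tau t
       (mmul (mmul (mmul (O t tau) (strain_rate (L t))) (O tau t)) (M tau t))).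

Definition N_ode (t0 t1 : R) (L : R -> Mat) (O N : Fam) : Prop :=
  (forall t, inI t0 t1 t -> mtr (N t t) = mI) /\
  (forall tau t, inI t0 t1 tau -> inI t0 t1 t ->
     dtau_is t0 t1 (famT N) tau t
       (mopp (mmul (mmul (mmul (O tau t) (strain_rate (L tau))) (O t tau))
                   (mtr (N tau t))))).

Definition decomp (t0 t1 : R) (F O M N : Fam) : Prop :=
  linear_process t0 t1 O /\ rotational t0 t1 O /\
  irrotational t0 t1 M /\ irrotational_tau t0 t1 (famT N) /\
  (forall tau t, inI t0 t1 tau -> inI t0 t1 t ->
     F tau t = mmul (O tau t) (M tau t) /\ F tau t = mmul (N tau t) (O tau t)).

(* Main.v *)
Require Import Defs.
From Stdlib Require Import Reals Lra Psatz FunctionalExtensionality ClassicalEpsilon.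
Open Scope R_scope.

Lemma mat_ext (A B : Mat) : (forall i j, A i j = B i j) -> A = B.
Proof. intros H; extensionality i; extensionality j; apply H. Qed.

Ltac mcase := intros; apply mat_ext; intros i j; destruct i, j;
  unfold mmul, mtr, madd, mopp, mscal, mI, spin, strain_rate; simpl; try ring.

Lemma mmul_assoc A B C : mmul (mmul A B) C = mmul A (mmul B C).
Proof. apply mat_ext; intros i j; unfold mmul; ring. Qed.
Lemma mmul_I_l A : mmul mI A = A.
Proof. mcase. Qed.
Lemma mmul_I_r A : mmul A mI = A.
Proof. mcase. Qed.
Lemma mtr_mmul A B : mtr (mmul A B) = mmul (mtr B) (mtr A).
Proof. apply mat_ext; intros i j; unfold mmul, mtr; ring. Qed.
Lemma mtr_tr A : mtr (mtr A) = A.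
Proof. reflexivity. Qed.
Lemma mtr_I : mtr mI = mI.
Proof. mcase. Qed.
Lemma mtr_add A B : mtr (madd A B) = madd (mtr A) (mtr B).
Proof. reflexivity. Qed.
Lemma mtr_opp A : mtr (mopp A) = mopp (mtr A).
Proof. reflexivity. Qed.
Lemma mmul_add_l A B C : mmul (madd A B) C = madd (mmul A C) (mmul B C).
Proof. apply mat_ext; intros i j; unfold mmul, madd; ring. Qed.
Lemma mmul_add_r A B C : mmul A (madd B C) = madd (mmul A B) (mmul A C).
Proof. apply mat_ext; intros i j; unfold mmul, madd; ring. Qed.
Lemma mmul_opp_l A B : mmul (mopp A) B = mopp (mmul A B).
Proof. apply mat_ext; intros i j; unfold mmul, mopp; ring. Qed.
Lemma mmul_opp_r A B : mmul A (mopp B) = mopp (mmul A B).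
Proof. apply mat_ext; intros i j; unfold mmul, mopp; ring. Qed.
Lemma mmul_scal_l c A B : mmul (mscal c A) B = mscal c (mmul A B).
Proof. apply mat_ext; intros i j; unfold mmul, mscal; ring. Qed.
Lemma mmul_scal_r c A B : mmul A (mscal c B) = mscal c (mmul A B).
Proof. apply mat_ext; intros i j; unfold mmul, mscal; ring. Qed.

Definition mzero : Mat := fun _ _ => 0.
Lemma mmul_0_l A : mmul mzero A = mzero.
Proof. apply mat_ext; intros i j; unfold mmul, mzero; ring. Qed.
Lemma mmul_0_r A : mmul A mzero = mzero.
Proof. apply mat_ext; intros i j; unfold mmul, mzero; ring. Qed.
Lemma madd_0_l A : madd mzero A = A.
Proof. apply mat_ext; intros i j; unfold madd, mzero; ring. Qed.
Lemma madd_0_r A : madd A mzero = A.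
Proof. apply mat_ext; intros i j; unfold madd, mzero; ring. Qed.

Lemma spin_skew A : mtr (spin A) = mopp (spin A).
Proof. apply mat_ext; intros i j; unfold spin, mtr, mopp, mscal, madd; ring. Qed.
Lemma strain_symm A : mtr (strain_rate A) = strain_rate A.
Proof. apply mat_ext; intros i j; unfold strain_rate, mtr, mscal, madd; ring. Qed.
Lemma spin_strain A : madd (spin A) (strain_rate A) = A.
Proof. apply mat_ext; intros i j; unfold strain_rate, spin, mtr, mopp, mscal, madd; field. Qed.
Lemma spin_trL A : madd (spin A) (mtr A) = strain_rate A.
Proof. apply mat_ext; intros i j; unfold strain_rate, spin, mtr, mopp, mscal, madd; field. Qed.
Lemma spin_L A : madd (mopp (spin A)) A = strain_rate A.
Proof. apply mat_ext; intros i j; unfold strain_rate, spin, mtr, mopp, mscal, madd; field. Qed.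

Lemma mdet_mul A B : mdet (mmul A B) = mdet A * mdet B.
Proof. unfold mdet, mmul; ring. Qed.
Lemma mdet_tr A : mdet (mtr A) = mdet A.
Proof. unfold mdet, mtr; ring. Qed.
Lemma mdet_I : mdet mI = 1.
Proof. unfold mdet, mI; simpl; ring. Qed.

Definition madj (A : Mat) : Mat := fun i j =>
  match j, i with
  | i0, i0 => A i1 i1 * A i2 i2 - A i1 i2 * A i2 i1
  | i0, i1 => - (A i1 i0 * A i2 i2 - A i1 i2 * A i2 i0)
  | i0, i2 => A i1 i0 * A i2 i1 - A i1 i1 * A i2 i0
  | i1, i0 => - (A i0 i1 * A i2 i2 - A i0 i2 * A i2 i1)
  | i1, i1 => A i0 i0 * A i2 i2 - A i0 i2 * A i2 i0
  | i1, i2 => - (A i0 i0 * A i2 i1 - A i0 i1 * A i2 i0)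
  | i2, i0 => A i0 i1 * A i1 i2 - A i0 i2 * A i1 i1
  | i2, i1 => - (A i0 i0 * A i1 i2 - A i0 i2 * A i1 i0)
  | i2, i2 => A i0 i0 * A i1 i1 - A i0 i1 * A i1 i0
  end.
Lemma madj_r A : mmul A (madj A) = mscal (mdet A) mI.
Proof. apply mat_ext; intros i j; destruct i, j; unfold mmul, madj, mscal, mI, mdet; simpl; ring. Qed.
Lemma madj_l A : mmul (madj A) A = mscal (mdet A) mI.
Proof. apply mat_ext; intros i j; destruct i, j; unfold mmul, madj, mscal, mI, mdet; simpl; ring. Qed.

Lemma inv_comm A B : mmul A B = mI -> mmul B A = mI.
Proof.
  intros H.
  assert (Hd : mdet A * mdet B = 1) by (rewrite <- mdet_mul, H; apply mdet_I).
  assert (HB : mdet B <> 0) by (intro E; rewrite E in Hd; lra).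
  (* A = A (B adj B)/det B = adj B / det B *)
  assert (HA : A = mscal (/ mdet B) (madj B)).
  { transitivity (mscal (/ mdet B) (mmul A (mmul B (madj B)))).
    - rewrite madj_r. apply mat_ext; intros i j; unfold mscal, mmul, mI;
      destruct i, j; simpl; field; auto.
    - rewrite <- mmul_assoc, H, mmul_I_l; reflexivity. }
  rewrite HA, mmul_scal_r, madj_r. apply mat_ext; intros i j; unfold mscal;
  field; auto.
Qed.

Lemma is_inverse_sym A B : is_inverse A B -> is_inverse B A.
Proof. intros [H1 H2]; split; auto. Qed.

Definition Dm (t0 t1 t : R) := fun s => inI t0 t1 s /\ s <> t.

Lemma lim_ext f g D l x0 : (forall x, D x -> f x = g x) ->
  limit1_in f D l x0 -> limit1_in g D l x0.
Proof.
  intros He H eps Heps; destruct (H eps Heps) as [a [Ha Hb]].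
  exists a; split; auto. intros x [Dx Hx]; rewrite <- He by auto; apply Hb; auto.
Qed.

Lemma lim_const c D x0 : limit1_in (fun _ => c) D c x0.
Proof. apply (limit_free (fun _ => c) D 0 x0). Qed.

Lemma lim_id D x0 : limit1_in (fun x => x) D x0 x0.
Proof. apply lim_x. Qed.

Definition cont_in (t0 t1 : R) (f : R -> R) (t : R) : Prop :=
  forall eps, 0 < eps -> exists del, 0 < del /\
    forall s, inI t0 t1 s -> Rabs (s - t) < del -> Rabs (f s - f t) < eps.

Lemma din_lim t0 t1 f t l : deriv_in t0 t1 f t l ->
  limit1_in f (Dm t0 t1 t) (f t) t.
Proof.
  intros H.
  assert (H1 : limit1_in (fun s => (f s - f t) / (s - t) * (s - t) + f t)
                 (Dm t0 t1 t) (l * (t - t) + f t) t).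
  { apply limit_plus; [apply limit_mul|apply lim_const]; auto.
    apply limit_minus; [apply lim_id|apply lim_const]. }
  replace (l * (t - t) + f t) with (f t) in H1 by ring.
  revert H1; apply lim_ext. intros x [_ Hx]. field. intro E; apply Hx; lra.
Qed.

Lemma din_cont t0 t1 f t l : deriv_in t0 t1 f t l -> cont_in t0 t1 f t.
Proof.
  intros H eps Heps. destruct (din_lim _ _ _ _ _ H eps Heps) as [a [Ha Hb]].
  exists a; split; [lra|]. intros s Hs Hst.
  destruct (Req_dec s t) as [->|Hne].
  - rewrite Rminus_diag, Rabs_R0; lra.
  - apply (Hb s). split; [split; auto|]. exact Hst.
Qed.

Lemma din_plus t0 t1 f g t lf lg : deriv_in t0 t1 f t lf -> deriv_in t0 t1 g t lg ->
  deriv_in t0 t1 (fun s => f s + g s) t (lf + lg).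
Proof.
  intros Hf Hg. unfold deriv_in.
  eapply lim_ext; [|apply limit_plus; [exact Hf|exact Hg]].
  intros x [_ Hx]; simpl. field. intro E; apply Hx; lra.
Qed.

Lemma din_opp t0 t1 f t lf : deriv_in t0 t1 f t lf ->
  deriv_in t0 t1 (fun s => - f s) t (- lf).
Proof.
  intros Hf. unfold deriv_in.
  eapply lim_ext; [|apply limit_Ropp; exact Hf].
  intros x [_ Hx]; simpl. field. intro E; apply Hx; lra.
Qed.

Lemma din_const t0 t1 c t : deriv_in t0 t1 (fun _ => c) t 0.
Proof.
  unfold deriv_in. eapply lim_ext; [|apply lim_const].
  intros x [_ Hx]; simpl. field. intro E; apply Hx; lra.
Qed.

Lemma din_mult t0 t1 f g t lf lg : deriv_in t0 t1 f t lf -> deriv_in t0 t1 g t lg ->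
  deriv_in t0 t1 (fun s => f s * g s) t (lf * g t + f t * lg).
Proof.
  intros Hf Hg. pose proof (din_lim _ _ _ _ _ Hg) as Hgc. unfold deriv_in.
  eapply lim_ext; [|apply limit_plus; [apply limit_mul; [exact Hf|exact Hgc]
                                      |apply limit_mul; [apply lim_const|exact Hg]]].
  intros x [_ Hx]; simpl. field. intro E; apply Hx; lra.
Qed.

Lemma din_ext t0 t1 f g t l : (forall s, inI t0 t1 s -> f s = g s) -> inI t0 t1 t ->
  deriv_in t0 t1 f t l -> deriv_in t0 t1 g t l.
Proof.
  intros He Ht H. unfold deriv_in. eapply lim_ext; [|exact H].
  intros x [Hx _]; simpl. rewrite !He; auto.
Qed.

Lemma din_eql t0 t1 f t l l' : l = l' -> deriv_in t0 t1 f t l -> deriv_in t0 t1 f t l'.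
Proof. intros ->; auto. Qed.

Lemma dpl_din t0 t1 f t l : derivable_pt_lim f t l -> deriv_in t0 t1 f t l.
Proof.
  intros H eps Heps. destruct (H eps Heps) as [d Hd].
  exists d; split; [apply cond_pos|]. intros x [[_ Hx] Hxd]. simpl in *.
  unfold Rdist in *.
  specialize (Hd (x - t)). replace (t + (x - t)) with x in Hd by ring.
  apply Hd; auto. intro E; apply Hx; lra.
Qed.

Lemma din_unique t0 t1 f t l l' : t0 < t1 -> inI t0 t1 t ->
  deriv_in t0 t1 f t l -> deriv_in t0 t1 f t l' -> l = l'.
Proof.
  intros Hlt Ht H1 H2. eapply single_limit; [|exact H1|exact H2].
  intros alp Halp. unfold inI in Ht.
  destruct (Rle_dec t ((t0 + t1)/2)).
  - exists (t + Rmin (alp/2) ((t1 - t0)/2)). unfold Dm, inI, Rdist.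
    assert (0 < Rmin (alp/2) ((t1 - t0)/2)) by (apply Rmin_glb_lt; lra).
    assert (Rmin (alp/2) ((t1 - t0)/2) <= alp/2) by apply Rmin_l.
    assert (Rmin (alp/2) ((t1 - t0)/2) <= (t1-t0)/2) by apply Rmin_r.
    repeat split; try lra. rewrite Rabs_right; lra.
  - exists (t - Rmin (alp/2) ((t1 - t0)/2)). unfold Dm, inI, Rdist.
    assert (0 < Rmin (alp/2) ((t1 - t0)/2)) by (apply Rmin_glb_lt; lra).
    assert (Rmin (alp/2) ((t1 - t0)/2) <= alp/2) by apply Rmin_l.
    assert (Rmin (alp/2) ((t1 - t0)/2) <= (t1-t0)/2) by apply Rmin_r.
    repeat split; try lra. rewrite Rabs_left; lra.
Qed.

Definition mdin (t0 t1 : R) (A : R -> Mat) (t : R) (A' : Mat) : Prop :=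
  forall i j, deriv_in t0 t1 (fun s => A s i j) t (A' i j).

Lemma mdin_mul t0 t1 A B t A' B' : mdin t0 t1 A t A' -> mdin t0 t1 B t B' ->
  mdin t0 t1 (fun s => mmul (A s) (B s)) t (madd (mmul A' (B t)) (mmul (A t) B')).
Proof.
  intros HA HB i j. unfold mmul, madd.
  pose proof (din_plus _ _ _ _ _ _ _ (din_plus _ _ _ _ _ _ _
     (din_mult _ _ _ _ _ _ _ (HA i i0) (HB i0 j)) (din_mult _ _ _ _ _ _ _ (HA i i1) (HB i1 j)))
     (din_mult _ _ _ _ _ _ _ (HA i i2) (HB i2 j))) as H.
  eapply din_eql; [|exact H]. simpl. ring.
Qed.

Lemma mdin_add t0 t1 A B t A' B' : mdin t0 t1 A t A' -> mdin t0 t1 B t B' ->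
  mdin t0 t1 (fun s => madd (A s) (B s)) t (madd A' B').
Proof. intros HA HB i j. unfold madd. apply din_plus; auto. Qed.

Lemma mdin_opp t0 t1 A t A' : mdin t0 t1 A t A' ->
  mdin t0 t1 (fun s => mopp (A s)) t (mopp A').
Proof. intros HA i j. unfold mopp. apply din_opp; auto. Qed.

Lemma mdin_tr t0 t1 A t A' : mdin t0 t1 A t A' ->
  mdin t0 t1 (fun s => mtr (A s)) t (mtr A').
Proof. intros HA i j. unfold mtr. apply HA. Qed.

Lemma mdin_const t0 t1 C t : mdin t0 t1 (fun _ => C) t mzero.
Proof. intros i j. apply din_const. Qed.

Lemma mdin_eql t0 t1 A t A' A'' : A' = A'' -> mdin t0 t1 A t A' -> mdin t0 t1 A t A''.
Proof. intros ->; auto. Qed.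

Lemma mdin_ext t0 t1 A B t A' : (forall s, inI t0 t1 s -> A s = B s) -> inI t0 t1 t ->
  mdin t0 t1 A t A' -> mdin t0 t1 B t A'.
Proof. intros He Ht H i j. eapply din_ext; [|exact Ht|apply H]. intros s Hs; simpl; rewrite (He s Hs); auto. Qed.

Lemma mdin_unique t0 t1 A t A' A'' : t0 < t1 -> inI t0 t1 t ->
  mdin t0 t1 A t A' -> mdin t0 t1 A t A'' -> A' = A''.
Proof. intros Hl Ht H1 H2. apply mat_ext; intros i j. eapply din_unique; eauto. Qed.

Lemma cont2_const t0 t1 c : cont2 t0 t1 (fun _ _ => c).
Proof. intros a b Ha Hb eps He; exists 1; split; [lra|]; intros.
  rewrite Rminus_diag, Rabs_R0; lra. Qed.

Lemma cont2_plus t0 t1 f g : cont2 t0 t1 f -> cont2 t0 t1 g ->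
  cont2 t0 t1 (fun a b => f a b + g a b).
Proof.
  intros Hf Hg a b Ha Hb eps He.
  destruct (Hf a b Ha Hb (eps/2)) as [d1 [Hd1 H1]]; [lra|].
  destruct (Hg a b Ha Hb (eps/2)) as [d2 [Hd2 H2]]; [lra|].
  exists (Rmin d1 d2); split; [apply Rmin_glb_lt; auto|].
  intros a' b' Ha' Hb' Hda Hdb.
  assert (Rmin d1 d2 <= d1) by apply Rmin_l. assert (Rmin d1 d2 <= d2) by apply Rmin_r.
  specialize (H1 a' b' Ha' Hb'); specialize (H2 a' b' Ha' Hb').
  replace (f a' b' + g a' b' - (f a b + g a b)) with ((f a' b' - f a b) + (g a' b' - g a b)) by ring.
  eapply Rle_lt_trans; [apply Rabs_triang|].
  assert (Rabs (f a' b' - f a b) < eps/2) by (apply H1; lra).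
  assert (Rabs (g a' b' - g a b) < eps/2) by (apply H2; lra). lra.
Qed.

Lemma cont2_opp t0 t1 f : cont2 t0 t1 f -> cont2 t0 t1 (fun a b => - f a b).
Proof.
  intros Hf a b Ha Hb eps He. destruct (Hf a b Ha Hb eps He) as [d [Hd H]].
  exists d; split; auto; intros. replace (- f a' b' - - f a b) with (- (f a' b' - f a b)) by ring.
  rewrite Rabs_Ropp; auto.
Qed.

Lemma prod_bound x y x' y' e : 0 < e -> e <= 1 -> Rabs (x' - x) < e -> Rabs (y' - y) < e ->
  Rabs (x' * y' - x * y) <= e * (1 + Rabs x + Rabs y).
Proof.
  intros He He1 Hx Hy.
  replace (x' * y' - x * y) with ((x' - x) * (y' - y) + x * (y' - y) + y * (x' - x)) by ring.
  eapply Rle_trans; [apply Rabs_triang|].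
  eapply Rle_trans; [apply Rplus_le_compat_r; apply Rabs_triang|].
  rewrite !Rabs_mult.
  pose proof (Rabs_pos (x'-x)). pose proof (Rabs_pos (y'-y)).
  pose proof (Rabs_pos x). pose proof (Rabs_pos y).
  assert (Rabs (x'-x) * Rabs (y'-y) <= e * 1) by (apply Rmult_le_compat; lra).
  assert (Rabs x * Rabs (y'-y) <= Rabs x * e) by (apply Rmult_le_compat_l; lra).
  assert (Rabs y * Rabs (x'-x) <= Rabs y * e) by (apply Rmult_le_compat_l; lra).
  nra.
Qed.

Lemma cont2_mult t0 t1 f g : cont2 t0 t1 f -> cont2 t0 t1 g ->
  cont2 t0 t1 (fun a b => f a b * g a b).
Proof.
  intros Hf Hg a b Ha Hb eps He.
  set (K := 1 + Rabs (f a b) + Rabs (g a b)).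
  assert (HK : 1 <= K) by (unfold K; pose proof (Rabs_pos (f a b)); pose proof (Rabs_pos (g a b)); lra).
  set (e := Rmin 1 (eps / (2 * K))).
  assert (He0 : 0 < e) by (apply Rmin_glb_lt; [lra|]; apply Rdiv_lt_0_compat; lra).
  assert (He1 : e <= 1) by apply Rmin_l.
  assert (He2 : e <= eps / (2*K)) by apply Rmin_r.
  destruct (Hf a b Ha Hb e He0) as [d1 [Hd1 H1]].
  destruct (Hg a b Ha Hb e He0) as [d2 [Hd2 H2]].
  exists (Rmin d1 d2); split; [apply Rmin_glb_lt; auto|].
  intros a' b' Ha' Hb' Hda Hdb.
  assert (Rmin d1 d2 <= d1) by apply Rmin_l. assert (Rmin d1 d2 <= d2) by apply Rmin_r.
  eapply Rle_lt_trans; [apply prod_bound; [exact He0|exact He1|apply H1|apply H2]; auto; lra|].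
  fold K. assert (e * K <= eps / (2*K) * K) by (apply Rmult_le_compat_r; lra).
  replace (eps / (2*K) * K) with (eps/2) in H3 by (field; lra). lra.
Qed.

Lemma cont2_rgt t0 t1 f : (forall s, inI t0 t1 s -> cont_in t0 t1 f s) ->
  cont2 t0 t1 (fun _ b => f b).
Proof.
  intros H a b Ha Hb eps He. destruct (H b Hb eps He) as [d [Hd H1]].
  exists d; split; auto.
Qed.

Lemma cont2_swap t0 t1 f : cont2 t0 t1 (fun _ b => f b) -> cont2 t0 t1 (fun a _ => f a).
Proof.
  intros H a b Ha Hb eps He. destruct (H b a Hb Ha eps He) as [d [Hd H1]].
  exists d; split; auto. intros a' b' Ha' Hb' H2 H3. apply (H1 b' a'); auto.
Qed.

Lemma cont2_diag t0 t1 f : cont2 t0 t1 (fun _ b => f b) ->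
  forall s, inI t0 t1 s -> cont_in t0 t1 f s.
Proof.
  intros H s Hs eps He. destruct (H s s Hs Hs eps He) as [d [Hd H1]].
  exists d; split; auto. intros s' Hs' H2. apply (H1 s s'); auto.
  rewrite Rminus_diag, Rabs_R0; auto.
Qed.

Definition mc2 (t0 t1 : R) (T : R -> R -> Mat) : Prop :=
  forall i j, cont2 t0 t1 (fun a b => T a b i j).
Definition mc1 (t0 t1 : R) (A : R -> Mat) : Prop := mc2 t0 t1 (fun _ b => A b).

Lemma mc2_mul t0 t1 T S : mc2 t0 t1 T -> mc2 t0 t1 S ->
  mc2 t0 t1 (fun a b => mmul (T a b) (S a b)).
Proof.
  intros HT HS i j. unfold mmul.
  repeat apply cont2_plus; apply cont2_mult; auto.
Qed.
Lemma mc2_add t0 t1 T S : mc2 t0 t1 T -> mc2 t0 t1 S ->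
  mc2 t0 t1 (fun a b => madd (T a b) (S a b)).
Proof. intros HT HS i j. unfold madd. apply cont2_plus; auto. Qed.
Lemma mc2_opp t0 t1 T : mc2 t0 t1 T -> mc2 t0 t1 (fun a b => mopp (T a b)).
Proof. intros HT i j. unfold mopp. apply cont2_opp; auto. Qed.
Lemma mc2_tr t0 t1 T : mc2 t0 t1 T -> mc2 t0 t1 (fun a b => mtr (T a b)).
Proof. intros HT i j. unfold mtr. apply HT. Qed.
Lemma mc2_scal t0 t1 c T : mc2 t0 t1 T -> mc2 t0 t1 (fun a b => mscal c (T a b)).
Proof. intros HT i j. unfold mscal. apply cont2_mult; [apply cont2_const|apply HT]. Qed.
Lemma mc2_const t0 t1 C : mc2 t0 t1 (fun _ _ => C).
Proof. intros i j. apply cont2_const. Qed.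
Lemma mc2_spin t0 t1 T : mc2 t0 t1 T -> mc2 t0 t1 (fun a b => spin (T a b)).
Proof. intros HT. unfold spin. apply mc2_scal, mc2_add, mc2_opp, mc2_tr; auto. Qed.
Lemma mc2_strain t0 t1 T : mc2 t0 t1 T -> mc2 t0 t1 (fun a b => strain_rate (T a b)).
Proof. intros HT. unfold strain_rate. apply mc2_scal, mc2_add, mc2_tr; auto. Qed.
Lemma mc1_lft t0 t1 A : mc1 t0 t1 A -> mc2 t0 t1 (fun a _ => A a).
Proof. intros H i j. apply (cont2_swap t0 t1 (fun s => A s i j)). apply H. Qed.
Lemma mc1_of_din t0 t1 A A' : (forall s, inI t0 t1 s -> mdin t0 t1 A s (A' s)) -> mc1 t0 t1 A.
Proof.
  intros H i j. apply (cont2_rgt t0 t1 (fun s => A s i j)). intros s Hs.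
  eapply din_cont. apply (H s Hs).
Qed.

Lemma C1_mul t0 t1 T S : C1_family t0 t1 T -> C1_family t0 t1 S ->
  C1_family t0 t1 (fun a b => mmul (T a b) (S a b)).
Proof.
  intros [Dt1 [Dta1 [H1 C1]]] [Dt2 [Dta2 [H2 C2]]].
  exists (fun a b => madd (mmul (Dt1 a b) (S a b)) (mmul (T a b) (Dt2 a b))).
  exists (fun a b => madd (mmul (Dta1 a b) (S a b)) (mmul (T a b) (Dta2 a b))).
  split.
  - intros tau t Htau Ht. destruct (H1 tau t Htau Ht) as [Ha Hb].
    destruct (H2 tau t Htau Ht) as [Hc Hd]. split.
    + apply (mdin_mul t0 t1 (T tau) (S tau) t); auto.
    + apply (mdin_mul t0 t1 (fun s => T s t) (fun s => S s t) tau); auto.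
  - assert (mT : mc2 t0 t1 T) by (intros i j; apply C1).
    assert (mDt1 : mc2 t0 t1 Dt1) by (intros i j; apply C1).
    assert (mDta1 : mc2 t0 t1 Dta1) by (intros i j; apply C1).
    assert (mS : mc2 t0 t1 S) by (intros i j; apply C2).
    assert (mDt2 : mc2 t0 t1 Dt2) by (intros i j; apply C2).
    assert (mDta2 : mc2 t0 t1 Dta2) by (intros i j; apply C2).
    intros i j; repeat split.
    + apply mc2_mul; auto.
    + apply mc2_add; apply mc2_mul; auto.
    + apply mc2_add; apply mc2_mul; auto.
Qed.

Lemma C1_tr t0 t1 T : C1_family t0 t1 T -> C1_family t0 t1 (fun a b => mtr (T a b)).
Proof.
  intros [Dt1 [Dta1 [H1 C1]]].
  exists (fun a b => mtr (Dt1 a b)), (fun a b => mtr (Dta1 a b)). split.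
  - intros tau t Htau Ht. destruct (H1 tau t Htau Ht) as [Ha Hb]. split.
    + apply (mdin_tr t0 t1 (T tau) t); auto.
    + apply (mdin_tr t0 t1 (fun s => T s t) tau); auto.
  - intros i j; repeat split; unfold mtr; apply C1.
Qed.

Lemma C1_t t0 t1 A A' : (forall s, inI t0 t1 s -> mdin t0 t1 A s (A' s)) ->
  mc1 t0 t1 A' -> C1_family t0 t1 (fun _ b => A b).
Proof.
  intros H HC. exists (fun _ b => A' b), (fun _ _ => mzero). split.
  - intros tau t Htau Ht. split; [apply H; auto|apply (mdin_const t0 t1 (A t) tau)].
  - assert (mc1 t0 t1 A) by (eapply mc1_of_din; eauto).
    intros i j; repeat split; try apply H0; try apply HC. apply cont2_const.
Qed.

Lemma C1_tau t0 t1 A A' : (forall s, inI t0 t1 s -> mdin t0 t1 A s (A' s)) ->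
  mc1 t0 t1 A' -> C1_family t0 t1 (fun a _ => A a).
Proof.
  intros H HC. exists (fun _ _ => mzero), (fun a _ => A' a). split.
  - intros tau t Htau Ht. split; [apply (mdin_const t0 t1 (A tau) t)|apply H; auto].
  - assert (mc1 t0 t1 A) by (eapply mc1_of_din; eauto).
    apply mc1_lft in H0. apply mc1_lft in HC.
    intros i j; repeat split; try apply H0; try apply HC. apply cont2_const.
Qed.

Lemma C1_ext t0 t1 T S : (forall a b, T a b = S a b) -> C1_family t0 t1 T -> C1_family t0 t1 S.
Proof.
  intros He H. replace S with T; auto. extensionality a; extensionality b; auto.
Qed.

From Coquelicot Require Import Coquelicot.
From Stdlib Require Import Reals Lra Psatz FunctionalExtensionality ClassicalEpsilon.
Open Scope R_scope.

Definition clamp (t0 t1 s : R) := Rmax t0 (Rmin t1 s).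

Lemma clamp_in t0 t1 s : t0 <= t1 -> inI t0 t1 (clamp t0 t1 s).
Proof.
  intros H. unfold clamp, inI. split; [apply Rmax_l|].
  apply Rmax_lub; [lra|apply Rmin_l].
Qed.

Lemma clamp_id t0 t1 s : inI t0 t1 s -> clamp t0 t1 s = s.
Proof.
  intros [H1 H2]. unfold clamp. rewrite Rmin_right by lra. rewrite Rmax_right; lra.
Qed.

Lemma clamp_lip t0 t1 s s' : t0 <= t1 -> Rabs (clamp t0 t1 s' - clamp t0 t1 s) <= Rabs (s' - s).
Proof.
  intros H. unfold clamp, Rmax, Rmin.
  repeat destruct Rle_dec; unfold Rabs; repeat destruct Rcase_abs; lra.
Qed.

Lemma cont_clamp t0 t1 f : t0 <= t1 -> (forall s, inI t0 t1 s -> cont_in t0 t1 f s) ->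
  forall x, continuity_pt (fun s => f (clamp t0 t1 s)) x.
Proof.
  intros Hle H x. unfold continuity_pt, continue_in, limit1_in, limit_in. simpl.
  intros eps Heps. destruct (H (clamp t0 t1 x) (clamp_in _ _ _ Hle) eps Heps) as [d [Hd Hc]].
  exists d; split; auto. intros y [_ Hy]. unfold Rdist in *.
  apply Hc; [apply clamp_in; auto|].
  eapply Rle_lt_trans; [apply clamp_lip; auto|auto].
Qed.

Lemma din_interior t0 t1 f x l : t0 < x < t1 -> deriv_in t0 t1 f x l ->
  derivable_pt_lim (fun s => f (clamp t0 t1 s)) x l.
Proof.
  intros Hx H eps Heps. destruct (H eps Heps) as [a [Ha Hb]].
  assert (Hd : 0 < Rmin a (Rmin (x - t0) (t1 - x))) by
    (apply Rmin_glb_lt; [lra|apply Rmin_glb_lt; lra]).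
  exists (mkposreal _ Hd). intros h Hh Hhd. simpl in Hhd.
  assert (Rmin a (Rmin (x - t0) (t1 - x)) <= a) by apply Rmin_l.
  assert (Rmin a (Rmin (x - t0) (t1 - x)) <= Rmin (x - t0) (t1 - x)) by apply Rmin_r.
  assert (Rmin (x - t0) (t1 - x) <= x - t0) by apply Rmin_l.
  assert (Rmin (x - t0) (t1 - x) <= t1 - x) by apply Rmin_r.
  assert (Habs : - Rabs h <= h <= Rabs h) by (unfold Rabs; destruct Rcase_abs; lra).
  assert (Hin : inI t0 t1 (x + h)) by (unfold inI; lra).
  rewrite (clamp_id t0 t1 (x+h)) by auto. rewrite (clamp_id t0 t1 x) by (unfold inI; lra).
  specialize (Hb (x + h)). simpl in Hb. unfold Rdist in Hb.
  replace (x + h - x) with h in Hb by ring. apply Hb. split.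
  - split; auto. intro E; apply Hh; lra.
  - lra.
Qed.

Lemma mono t0 t1 f f' p q : (forall s, inI t0 t1 s -> deriv_in t0 t1 f s (f' s)) ->
  (forall s, inI t0 t1 s -> f' s <= 0) -> inI t0 t1 p -> inI t0 t1 q -> p <= q -> f q <= f p.
Proof.
  intros Hd Hn Hp Hq Hpq. destruct (Req_dec p q) as [->|Hne]; [lra|].
  assert (Hlt : p < q) by lra. unfold inI in *.
  set (g := fun s => f (clamp t0 t1 s)).
  destruct (MVT_gen g p q f') as [c [Hc Heq]].
  - rewrite Rmin_left, Rmax_right by lra. intros x Hx. apply is_derive_Reals.
    apply din_interior; [lra|]. apply Hd. unfold inI; lra.
  - rewrite Rmin_left, Rmax_right by lra. intros x Hx.
    apply cont_clamp; [lra|]. intros s Hs. eapply din_cont; apply Hd; auto.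
  - rewrite Rmin_left, Rmax_right in Hc by lra.
    unfold g in Heq. rewrite !clamp_id in Heq by (unfold inI; lra).
    assert (f' c <= 0) by (apply Hn; unfold inI; lra).
    assert (f' c * (q - p) <= 0) by (apply Rmult_le_0_r; lra). lra.
Qed.

Definition msq (A : Mat) : R :=
  A i0 i0 * A i0 i0 + A i0 i1 * A i0 i1 + A i0 i2 * A i0 i2 +
  A i1 i0 * A i1 i0 + A i1 i1 * A i1 i1 + A i1 i2 * A i1 i2 +
  A i2 i0 * A i2 i0 + A i2 i1 * A i2 i1 + A i2 i2 * A i2 i2.
Definition msqd (A A' : Mat) : R :=
  2 * (A i0 i0 * A' i0 i0 + A i0 i1 * A' i0 i1 + A i0 i2 * A' i0 i2 +
  A i1 i0 * A' i1 i0 + A i1 i1 * A' i1 i1 + A i1 i2 * A' i1 i2 +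
  A i2 i0 * A' i2 i0 + A i2 i1 * A' i2 i1 + A i2 i2 * A' i2 i2).

Lemma msq_nonneg A : 0 <= msq A.
Proof. unfold msq. repeat apply Rplus_le_le_0_compat; apply Rle_0_sqr. Qed.

Lemma msq_zero A : msq A = 0 -> A = mzero.
Proof.
  intros H. unfold msq in H.
  pose proof (Rle_0_sqr (A i0 i0)); pose proof (Rle_0_sqr (A i0 i1)); pose proof (Rle_0_sqr (A i0 i2));
  pose proof (Rle_0_sqr (A i1 i0)); pose proof (Rle_0_sqr (A i1 i1)); pose proof (Rle_0_sqr (A i1 i2));
  pose proof (Rle_0_sqr (A i2 i0)); pose proof (Rle_0_sqr (A i2 i1)); pose proof (Rle_0_sqr (A i2 i2)).
  unfold Rsqr in *.
  apply mat_ext; intros i j; unfold mzero; destruct i, j; nra.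
Qed.

Lemma din_msq t0 t1 X t X' : mdin t0 t1 X t X' ->
  deriv_in t0 t1 (fun s => msq (X s)) t (msqd (X t) X').
Proof.
  intros H. unfold msq.
  pose proof (fun i j => din_mult _ _ _ _ _ _ _ (H i j) (H i j)) as Hm.
  pose proof (din_plus _ _ _ _ _ _ _ (din_plus _ _ _ _ _ _ _ (din_plus _ _ _ _ _ _ _
    (din_plus _ _ _ _ _ _ _ (din_plus _ _ _ _ _ _ _ (din_plus _ _ _ _ _ _ _
    (din_plus _ _ _ _ _ _ _ (din_plus _ _ _ _ _ _ _ (Hm i0 i0) (Hm i0 i1)) (Hm i0 i2))
    (Hm i1 i0)) (Hm i1 i1)) (Hm i1 i2)) (Hm i2 i0)) (Hm i2 i1)) (Hm i2 i2)) as H'.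
  eapply din_eql; [|exact H']. unfold msqd. simpl. ring.
Qed.

Lemma tb C k x y : Rabs k <= C ->
  - (C * (x*x + y*y)) <= 2 * x * k * y <= C * (x*x + y*y).
Proof.
  intros Hk. assert (0 <= C) by (pose proof (Rabs_pos k); lra).
  assert (Hk2 : - C <= k <= C) by (unfold Rabs in Hk; destruct Rcase_abs; lra).
  pose proof (Rle_0_sqr (x - y)). pose proof (Rle_0_sqr (x + y)). unfold Rsqr in *.
  assert (0 <= (C - k) * ((x + y) * (x + y))) by (apply Rmult_le_pos; lra).
  assert (0 <= (C + k) * ((x - y) * (x - y))) by (apply Rmult_le_pos; lra).
  assert (0 <= (C - k) * ((x - y) * (x - y))) by (apply Rmult_le_pos; lra).
  assert (0 <= (C + k) * ((x + y) * (x + y))) by (apply Rmult_le_pos; lra).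
  split; nra.
Qed.

Lemma msqd_bound K C A : (forall i j, Rabs (K i j) <= C) ->
  - (6 * C * msq A) <= msqd A (mmul K A) <= 6 * C * msq A.
Proof.
  intros HK.
  assert (E : msqd A (mmul K A) =
    2 * A i0 i0 * K i0 i0 * A i0 i0 + 2 * A i0 i0 * K i0 i1 * A i1 i0 + 2 * A i0 i0 * K i0 i2 * A i2 i0 +
    2 * A i0 i1 * K i0 i0 * A i0 i1 + 2 * A i0 i1 * K i0 i1 * A i1 i1 + 2 * A i0 i1 * K i0 i2 * A i2 i1 +
    2 * A i0 i2 * K i0 i0 * A i0 i2 + 2 * A i0 i2 * K i0 i1 * A i1 i2 + 2 * A i0 i2 * K i0 i2 * A i2 i2 +
    2 * A i1 i0 * K i1 i0 * A i0 i0 + 2 * A i1 i0 * K i1 i1 * A i1 i0 + 2 * A i1 i0 * K i1 i2 * A i2 i0 +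
    2 * A i1 i1 * K i1 i0 * A i0 i1 + 2 * A i1 i1 * K i1 i1 * A i1 i1 + 2 * A i1 i1 * K i1 i2 * A i2 i1 +
    2 * A i1 i2 * K i1 i0 * A i0 i2 + 2 * A i1 i2 * K i1 i1 * A i1 i2 + 2 * A i1 i2 * K i1 i2 * A i2 i2 +
    2 * A i2 i0 * K i2 i0 * A i0 i0 + 2 * A i2 i0 * K i2 i1 * A i1 i0 + 2 * A i2 i0 * K i2 i2 * A i2 i0 +
    2 * A i2 i1 * K i2 i0 * A i0 i1 + 2 * A i2 i1 * K i2 i1 * A i1 i1 + 2 * A i2 i1 * K i2 i2 * A i2 i1 +
    2 * A i2 i2 * K i2 i0 * A i0 i2 + 2 * A i2 i2 * K i2 i1 * A i1 i2 + 2 * A i2 i2 * K i2 i2 * A i2 i2)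
    by (unfold msqd, mmul; ring).
  rewrite E. unfold msq.
  pose proof (fun i k j => tb C (K i k) (A i j) (A k j) (HK i k)) as T.
  pose proof (T i0 i0 i0); pose proof (T i0 i1 i0); pose proof (T i0 i2 i0);
  pose proof (T i0 i0 i1); pose proof (T i0 i1 i1); pose proof (T i0 i2 i1);
  pose proof (T i0 i0 i2); pose proof (T i0 i1 i2); pose proof (T i0 i2 i2);
  pose proof (T i1 i0 i0); pose proof (T i1 i1 i0); pose proof (T i1 i2 i0);
  pose proof (T i1 i0 i1); pose proof (T i1 i1 i1); pose proof (T i1 i2 i1);
  pose proof (T i1 i0 i2); pose proof (T i1 i1 i2); pose proof (T i1 i2 i2);
  pose proof (T i2 i0 i0); pose proof (T i2 i1 i0); pose proof (T i2 i2 i0);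
  pose proof (T i2 i0 i1); pose proof (T i2 i1 i1); pose proof (T i2 i2 i1);
  pose proof (T i2 i0 i2); pose proof (T i2 i1 i2); pose proof (T i2 i2 i2).
  clear T E. split; lra.
Qed.

Lemma dexp c b s : derivable_pt_lim (fun s => exp (c * (s - b))) s (c * exp (c * (s - b))).
Proof. apply is_derive_Reals. auto_derive; auto. unfold Rminus. ring. Qed.

Lemma uniq t0 t1 K C X b :
  (forall s, inI t0 t1 s -> forall i j, Rabs (K s i j) <= C) ->
  (forall s, inI t0 t1 s -> mdin t0 t1 X s (mmul (K s) (X s))) ->
  inI t0 t1 b -> X b = mzero -> forall s, inI t0 t1 s -> X s = mzero.
Proof.
  intros HK HX Hb H0 s Hs.
  set (c := 6 * C).
  assert (Hm : forall u, inI t0 t1 u ->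
     deriv_in t0 t1 (fun s => msq (X s)) u (msqd (X u) (mmul (K u) (X u)))).
  { intros u Hu. apply din_msq, HX; auto. }
  assert (Hbd : forall u, inI t0 t1 u ->
     - (c * msq (X u)) <= msqd (X u) (mmul (K u) (X u)) <= c * msq (X u)).
  { intros u Hu. unfold c. apply msqd_bound. apply HK; auto. }
  assert (Hmb : msq (X b) = 0) by (rewrite H0; unfold msq, mzero; ring).
  apply msq_zero.
  pose proof (msq_nonneg (X s)).
  destruct (Rle_dec b s).
  - set (h := fun u => msq (X u) * exp (- c * (u - b))).
    assert (Hh : h s <= h b).
    { apply (mono t0 t1 h (fun u => msqd (X u) (mmul (K u) (X u)) * exp (- c * (u - b))
                   + msq (X u) * (- c * exp (- c * (u - b))))); auto.
      - intros u Hu. unfold h. apply (din_mult t0 t1 (fun u => msq (X u)) (fun u => exp (- c * (u - b)))); auto. apply dpl_din, dexp.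
      - intros u Hu. specialize (Hbd u Hu). pose proof (exp_pos (- c * (u - b))).
        assert (msqd (X u) (mmul (K u) (X u)) - c * msq (X u) <= 0) by lra.
        assert ((msqd (X u) (mmul (K u) (X u)) - c * msq (X u)) * exp (- c * (u - b)) <= 0)
          by (apply Rmult_le_0_r; lra). nra. }
    unfold h in Hh. rewrite Hmb in Hh. pose proof (exp_pos (- c * (s - b))).
    assert (msq (X s) * exp (- c * (s - b)) <= 0) by lra.
    assert (0 <= msq (X s) * exp (- c * (s - b))) by (apply Rmult_le_pos; lra).
    assert (msq (X s) * exp (- c * (s - b)) = 0) by lra.
    apply Rmult_integral in H4. destruct H4; auto. lra.
  - set (h := fun u => - (msq (X u) * exp (c * (u - b)))).
    assert (Hh : h b <= h s).
    { apply (mono t0 t1 h (fun u => - (msqd (X u) (mmul (K u) (X u)) * exp (c * (u - b))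
                   + msq (X u) * (c * exp (c * (u - b)))))); auto; [| |lra].
      - intros u Hu. unfold h. apply (din_opp t0 t1 (fun u => msq (X u) * exp (c * (u - b)))). apply (din_mult t0 t1 (fun u => msq (X u)) (fun u => exp (c * (u - b)))); auto. apply dpl_din, dexp.
      - intros u Hu. specialize (Hbd u Hu). pose proof (exp_pos (c * (u - b))).
        assert (0 <= msqd (X u) (mmul (K u) (X u)) + c * msq (X u)) by lra.
        assert (0 <= (msqd (X u) (mmul (K u) (X u)) + c * msq (X u)) * exp (c * (u - b)))
          by (apply Rmult_le_pos; lra). nra. }
    unfold h in Hh. rewrite Hmb in Hh. pose proof (exp_pos (c * (s - b))).
    assert (msq (X s) * exp (c * (s - b)) <= 0) by lra.
    assert (0 <= msq (X s) * exp (c * (s - b))) by (apply Rmult_le_pos; lra).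
    assert (msq (X s) * exp (c * (s - b)) = 0) by lra.
    apply Rmult_integral in H4. destruct H4; auto. lra.
Qed.

Lemma const_of_zero t0 t1 X b : (forall s, inI t0 t1 s -> mdin t0 t1 X s mzero) ->
  inI t0 t1 b -> forall s, inI t0 t1 s -> X s = X b.
Proof.
  intros H Hb s Hs.
  assert (E : (fun u => madd (X u) (mopp (X b))) s = mzero).
  { apply (uniq t0 t1 (fun _ => mzero) 0 (fun u => madd (X u) (mopp (X b))) b); auto.
    - intros; unfold mzero; rewrite Rabs_R0; lra.
    - intros u Hu. rewrite mmul_0_l. eapply mdin_eql; [|apply mdin_add; [apply H; auto|apply mdin_const]].
      apply mat_ext; intros i j; unfold madd, mzero; ring.
    - apply mat_ext; intros i j; unfold madd, mopp, mzero; ring. }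
  apply mat_ext; intros i j. simpl in E. apply (f_equal (fun A => A i j)) in E.
  unfold madd, mopp, mzero in E. lra.
Qed.

Lemma dpow a n s : is_derive (fun s => (s - a)^(S n)) s (INR (S n) * (s-a)^n).
Proof.
  pose proof (is_derive_pow (fun s => s - a) (S n) s 1) as H.
  simpl pred in H. replace (INR (S n) * (s-a)^n) with (INR (S n) * 1 * (s-a)^n) by ring.
  apply H. auto_derive; auto.
Qed.

Lemma dpow2 a n s : is_derive (fun s => (a - s)^(S n)) s (- INR (S n) * (a-s)^n).
Proof.
  pose proof (is_derive_pow (fun s => a - s) (S n) s (-1)) as H.
  simpl pred in H. replace (- INR (S n) * (a-s)^n) with (INR (S n) * (-1) * (a-s)^n) by ring.
  apply H. auto_derive; auto.
Qed.

Lemma cont_poly q a n s : continuous (fun s => q * (s - a)^n) s.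
Proof. apply (@ex_derive_continuous R_AbsRing R_NormedModule). auto_derive; auto. Qed.
Lemma cont_poly2 q a n s : continuous (fun s => q * (a - s)^n) s.
Proof. apply (@ex_derive_continuous R_AbsRing R_NormedModule). auto_derive; auto. Qed.

Lemma int_bound (f : R -> R) a q n t : 0 <= q -> (forall s, continuous f s) ->
  (forall s, Rabs (f s) <= q * Rabs (s - a) ^ n) ->
  Rabs (RInt f a t) <= q * Rabs (t - a) ^ (S n) / INR (S n).
Proof.
  intros Hq Hc Hb.
  assert (HS : 0 < INR (S n)) by (apply lt_0_INR; lia).
  assert (exf : forall u v, ex_RInt f u v) by (intros; apply (@ex_RInt_continuous R_CompleteNormedModule); auto).
  assert (exa : forall u v, ex_RInt (fun s => Rabs (f s)) u v).
  { intros; apply (@ex_RInt_continuous R_CompleteNormedModule); intros; apply continuous_Rabs_comp; auto. }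
  destruct (Rle_dec a t).
  - assert (Hint : is_RInt (fun s => q * (s - a)^n) a t
              (minus (q * (t - a)^(S n) / INR (S n)) (q * (a - a)^(S n) / INR (S n)))).
    { apply (@is_RInt_derive R_CompleteNormedModule (fun s => q * (s - a)^(S n) / INR (S n))).
      - intros x _. auto_derive; auto.
        change (match n with 0%nat => 1 | S _ => INR n + 1 end) with (INR (S n)). unfold Rminus. field. lra.
      - intros; apply cont_poly. }
    apply (@is_RInt_unique R_CompleteNormedModule) in Hint.
    replace (minus (q * (t - a)^(S n) / INR (S n)) (q * (a - a)^(S n) / INR (S n)))
      with (q * (t - a)^(S n) / INR (S n)) in Hint
      by (unfold minus, plus, opp; simpl; rewrite Rminus_diag, Rmult_0_l, Rmult_0_r; unfold Rdiv; rewrite Rmult_0_l; ring).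
    rewrite (Rabs_right (t - a)) by lra.
    eapply Rle_trans; [apply abs_RInt_le; auto|].
    rewrite <- Hint. apply RInt_le; auto.
    + apply (@ex_RInt_continuous R_CompleteNormedModule); intros; apply cont_poly.
    + intros x Hx. rewrite <- (Rabs_right (x - a)) by lra. apply Hb.
  - assert (Hint : is_RInt (fun s => q * (a - s)^n) t a
              (minus (- (q * (a - a)^(S n) / INR (S n))) (- (q * (a - t)^(S n) / INR (S n))))).
    { apply (@is_RInt_derive R_CompleteNormedModule (fun s => - (q * (a - s)^(S n) / INR (S n)))).
      - intros x _. auto_derive; auto.
        change (match n with 0%nat => 1 | S _ => INR n + 1 end) with (INR (S n)). unfold Rminus. field. lra.
      - intros; apply cont_poly2. }
    apply (@is_RInt_unique R_CompleteNormedModule) in Hint.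
    replace (minus (- (q * (a - a)^(S n) / INR (S n))) (- (q * (a - t)^(S n) / INR (S n))))
      with (q * (a - t)^(S n) / INR (S n)) in Hint
      by (unfold minus, plus, opp; simpl; rewrite Rminus_diag, Rmult_0_l, Rmult_0_r; unfold Rdiv; rewrite Rmult_0_l; ring).
    rewrite (Rabs_left (t - a)) by lra. replace (- (t - a)) with (a - t) by ring.
    assert (RInt f a t = - RInt f t a) as ->. { rewrite <- opp_RInt_swap by auto. reflexivity. }
    rewrite Rabs_Ropp.
    eapply Rle_trans; [apply abs_RInt_le; auto; lra|].
    rewrite <- Hint. apply RInt_le; auto; [lra| |].
    + apply (@ex_RInt_continuous R_CompleteNormedModule); intros; apply cont_poly2.
    + intros x Hx. replace (a - x) with (Rabs (x - a)) by (rewrite Rabs_left; lra). apply Hb.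
Qed.

Fixpoint Pic (K : R -> Mat) (a : R) (n : nat) : R -> Mat :=
  match n with
  | O => fun _ => mI
  | S m => fun t i j => RInt (fun s => mmul (K s) (Pic K a m s) i j) a t
  end.

Lemma cplus (f g : R -> R) s : continuous f s -> continuous g s -> continuous (fun u => f u + g u) s.
Proof.
  intros Hf Hg. apply continuity_pt_filterlim. apply (continuity_pt_plus f g);
  apply continuity_pt_filterlim; auto.
Qed.
Lemma cmult (f g : R -> R) s : continuous f s -> continuous g s -> continuous (fun u => f u * g u) s.
Proof.
  intros Hf Hg. apply continuity_pt_filterlim. apply (continuity_pt_mult f g);
  apply continuity_pt_filterlim; auto.
Qed.

Lemma cont_mmul (A B : R -> Mat) :
  (forall s i j, continuous (fun u => A u i j) s) ->
  (forall s i j, continuous (fun u => B u i j) s) ->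
  forall s i j, continuous (fun u => mmul (A u) (B u) i j) s.
Proof.
  intros HA HB s i j. unfold mmul.
  repeat apply cplus; apply cmult; auto.
Qed.

Lemma mmul_bound K P i j C Bd : (forall l, Rabs (K i l) <= C) -> (forall l, Rabs (P l j) <= Bd) ->
  Rabs (mmul K P i j) <= 3 * C * Bd.
Proof.
  intros HK HP. unfold mmul.
  assert (Hl : forall l, Rabs (K i l * P l j) <= C * Bd).
  { intros l. rewrite Rabs_mult. apply Rmult_le_compat; try apply Rabs_pos; auto. }
  pose proof (Hl i0); pose proof (Hl i1); pose proof (Hl i2).
  eapply Rle_trans; [apply Rabs_triang|].
  eapply Rle_trans; [apply Rplus_le_compat_r; apply Rabs_triang|]. lra.
Qed.


Lemma Pic_facts (K : R -> Mat) a C :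
  (forall s i j, continuous (fun u => K u i j) s) ->
  (forall s i j, Rabs (K s i j) <= C) ->
  forall n, (forall s i j, continuous (fun u => Pic K a n u i j) s) /\
            (forall t i j, is_derive (fun u => Pic K a (S n) u i j) t (mmul (K t) (Pic K a n t) i j)) /\
            (forall t i j, Rabs (Pic K a n t i j) <= / INR (Factorial.fact n) * (3 * C * Rabs (t - a)) ^ n).
Proof.
  intros HKc HKb.
  assert (HC : 0 <= C) by (pose proof (HKb 0 i0 i0); pose proof (Rabs_pos (K 0 i0 i0)); lra).
  assert (Hder : forall n, (forall s i j, continuous (fun u => Pic K a n u i j) s) ->
             forall t i j, is_derive (fun u => Pic K a (S n) u i j) t (mmul (K t) (Pic K a n t) i j)).
  { intros n Hc t i j. simpl.
    assert (Hf : forall s, continuous (fun u => mmul (K u) (Pic K a n u) i j) s)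
      by (intros; apply cont_mmul; auto).
    apply (@is_derive_RInt R_NormedModule (fun u => mmul (K u) (Pic K a n u) i j)
             (fun b => RInt (fun s => mmul (K s) (Pic K a n s) i j) a b) a t).
    - apply filter_forall. intros b. apply (@RInt_correct R_CompleteNormedModule).
      apply (@ex_RInt_continuous R_CompleteNormedModule). intros; auto.
    - auto. }
  induction n.
  - split; [|split].
    + intros; apply continuous_const.
    + apply Hder. intros; apply continuous_const.
    + intros t i j. simpl. unfold mI. replace (/ 1 * 1) with 1 by field.
      destruct (I3_eqb i j); rewrite ?Rabs_R1, ?Rabs_R0; lra.
  - destruct IHn as [Hc [Hd Hb]].
    assert (Hc' : forall s i j, continuous (fun u => Pic K a (S n) u i j) s).
    { intros s i j. apply (@ex_derive_continuous R_AbsRing R_NormedModule).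
      eexists; apply Hd. }
    split; [exact Hc'|split; [apply Hder; auto|]].
    intros t i j. simpl Pic at 1.
    set (q := 3 * C * / INR (Factorial.fact n) * (3 * C) ^ n).
    assert (Hq : 0 <= q).
    { unfold q. apply Rmult_le_pos; [|apply pow_le; lra].
      apply Rmult_le_pos; [lra|]. left; apply Rinv_0_lt_compat, lt_0_INR, Factorial.lt_O_fact. }
    eapply Rle_trans; [apply (int_bound _ a q n t Hq)|].
    + intros; apply cont_mmul; auto.
    + intros s. eapply Rle_trans; [apply mmul_bound; [intros l; apply HKb|intros l; apply Hb]|].
      unfold q. rewrite Rpow_mult_distr. right; ring.
    + unfold q. rewrite fact_simpl, mult_INR. rewrite !Rpow_mult_distr.
      simpl pow. right. field. split; apply not_0_INR; [apply Factorial.fact_neq_0|lia].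
Qed.

Lemma exp_cv x : Un_cv (fun N => sum_f_R0 (fun k => / INR (Factorial.fact k) * x^k) N) (exp x).
Proof. unfold exp. destruct (exist_exp x) as [l Hl]. exact Hl. Qed.

Lemma abs_comp (u B : nat -> R) lB : (forall n, Rabs (u n) <= B n) ->
  Un_cv (fun N => sum_f_R0 B N) lB -> exists l, Un_cv (fun N => sum_f_R0 u N) l.
Proof.
  intros Hb Hc.
  assert (X : {l | Un_cv (fun N => sum_f_R0 B N) l}) by (exists lB; exact Hc).
  destruct (Rseries_CV_comp (fun n => (u n + Rabs (u n)) / 2) B) as [l1 H1]; auto.
  { intros n. specialize (Hb n). unfold Rabs in *; destruct Rcase_abs; split; lra. }
  destruct (Rseries_CV_comp (fun n => (Rabs (u n) - u n) / 2) B) as [l2 H2]; auto.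
  { intros n. specialize (Hb n). unfold Rabs in *; destruct Rcase_abs; split; lra. }
  exists (l1 - l2). pose proof (CV_minus _ _ _ _ H1 H2) as H.
  intros eps He. destruct (H eps He) as [N HN]. exists N; intros n Hn.
  specialize (HN n Hn). rewrite <- minus_sum in HN.
  replace (sum_f_R0 u n) with (sum_f_R0 (fun i => (u i + Rabs (u i)) / 2 - (Rabs (u i) - u i) / 2) n); auto.
  apply sum_eq; intros; field.
Qed.

Lemma cv_const c : Un_cv (fun _ => c) c.
Proof. intros eps He; exists O; intros; unfold Rdist; rewrite Rminus_diag, Rabs_R0; lra. Qed.

Lemma exist_sol (K : R -> Mat) C a :
  (forall s i j, continuous (fun u => K u i j) s) ->
  (forall s i j, Rabs (K s i j) <= C) ->
  exists Phi : R -> Mat, Phi a = mI /\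
    forall t i j, derivable_pt_lim (fun s => Phi s i j) t (mmul (K t) (Phi t) i j).
Proof.
  intros HKc HKb.
  assert (HC : 0 <= C) by (pose proof (HKb 0 i0 i0); pose proof (Rabs_pos (K 0 i0 i0)); lra).
  pose proof (Pic_facts K a C HKc HKb) as PF.
  set (P := Pic K a).
  set (Bn := fun rho k => / INR (Factorial.fact k) * (3 * C * rho) ^ k).
  assert (PW : forall t i j, exists l, Un_cv (fun n => sum_f_R0 (fun k => P k t i j) n) l).
  { intros t i j. apply (abs_comp _ (Bn (Rabs (t - a))) (exp (3 * C * Rabs (t - a)))).
    - intros n. apply (PF n).
    - apply exp_cv. }
  set (Phi := fun t i j => proj1_sig (constructive_indefinite_description _ (PW t i j))).
  assert (HPhi : forall t i j, Un_cv (fun n => sum_f_R0 (fun k => P k t i j) n) (Phi t i j)).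
  { intros t i j. unfold Phi. destruct (constructive_indefinite_description _ (PW t i j)); auto. }
  exists Phi. split.
  - apply mat_ext; intros i j. eapply UL_sequence; [apply HPhi|].
    eapply Un_cv_ext; [|apply cv_const]. intros n. simpl.
    induction n; simpl; auto.
    rewrite <- IHn. unfold P; simpl. rewrite RInt_point. unfold zero; simpl. ring.
  - intros t.
    set (r := mkposreal 1 Rlt_0_1).
    set (rho := Rabs (t - a) + 1).
    assert (Hball : forall k y i j, Boule t r y -> Rabs (P k y i j) <= Bn rho k).
    { intros k y i j Hy. eapply Rle_trans; [apply (PF k)|]. unfold Bn.
      apply Rmult_le_compat_l; [left; apply Rinv_0_lt_compat, lt_0_INR, Factorial.lt_O_fact|].
      apply pow_incr. split; [apply Rmult_le_pos; [lra|apply Rabs_pos]|].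
      apply Rmult_le_compat_l; [lra|]. unfold rho. unfold Boule in Hy. simpl in Hy.
      replace (y - a) with ((y - t) + (t - a)) by ring.
      eapply Rle_trans; [apply Rabs_triang|]. lra. }
    assert (CVU0 : forall i j eps, 0 < eps -> exists N, forall n y, (N <= n)%nat -> Boule t r y ->
                 Rabs (Phi y i j - sum_f_R0 (fun k => P k y i j) n) < eps).
    { intros i j eps He. destruct (exp_cv (3 * C * rho) eps He) as [N HN].
      exists N. intros n y Hn Hy.
      eapply Rle_lt_trans; [apply (sum_maj1 (fun k y => P k y i j) (Bn rho) y (Phi y i j) (exp (3 * C * rho)) n)|].
      - apply HPhi.
      - apply exp_cv.
      - intros k; apply Hball; auto.
      - specialize (HN n Hn). unfold Rdist in HN. unfold Bn.
        unfold Rabs in HN; destruct Rcase_abs; lra. }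
    intros i j.
    apply (CVU_derivable (fun n y => sum_f_R0 (fun k => P k y i j) (S n))
             (fun n y => mmul (K y) (fun i j => sum_f_R0 (fun k => P k y i j) n) i j)
             (fun y => Phi y i j) (fun y => mmul (K y) (Phi y) i j) t r).
    + intros eps He.
      set (e' := eps / (3 * (C + 1))).
      assert (He' : 0 < e') by (unfold e'; apply Rdiv_lt_0_compat; lra).
      destruct (CVU0 i0 j e' He') as [N0 H0].
      destruct (CVU0 i1 j e' He') as [N1 H1].
      destruct (CVU0 i2 j e' He') as [N2 H2].
      exists (max N0 (max N1 N2)). intros n y Hn Hy.
      assert (A0 := H0 n y ltac:(lia) Hy). assert (A1 := H1 n y ltac:(lia) Hy).
      assert (A2 := H2 n y ltac:(lia) Hy).
      unfold mmul.
      set (d0 := Phi y i0 j - sum_f_R0 (fun k => P k y i0 j) n) in *.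
      set (d1 := Phi y i1 j - sum_f_R0 (fun k => P k y i1 j) n) in *.
      set (d2 := Phi y i2 j - sum_f_R0 (fun k => P k y i2 j) n) in *.
      replace (K y i i0 * Phi y i0 j + K y i i1 * Phi y i1 j + K y i i2 * Phi y i2 j -
        (K y i i0 * sum_f_R0 (fun k => P k y i0 j) n + K y i i1 * sum_f_R0 (fun k => P k y i1 j) n +
         K y i i2 * sum_f_R0 (fun k => P k y i2 j) n))
        with (K y i i0 * d0 + K y i i1 * d1 + K y i i2 * d2) by (unfold d0, d1, d2; ring).
      assert (forall l d, Rabs d < e' -> Rabs (K y i l * d) <= C * e').
      { intros l d Hd. rewrite Rabs_mult. apply Rmult_le_compat; try apply Rabs_pos; auto; lra. }
      pose proof (H i0 d0 A0); pose proof (H i1 d1 A1); pose proof (H i2 d2 A2).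
      eapply Rle_lt_trans; [apply Rabs_triang|].
      eapply Rle_lt_trans; [apply Rplus_le_compat_r; apply Rabs_triang|].
      assert (3 * (C * e') < eps).
      { unfold e'. replace (3 * (C * (eps / (3 * (C + 1))))) with (eps * (C / (C + 1))) by (field; lra).
        assert (0 < 1 / (C + 1)) by (apply Rdiv_lt_0_compat; lra).
        assert (C / (C + 1) < 1) by (replace (C / (C + 1)) with (1 - 1 / (C + 1)) by (field; lra); lra).
        assert (eps * (C / (C + 1)) < eps * 1) by (apply Rmult_lt_compat_l; lra). lra. }
      lra.
    + intros y Hy eps He. destruct (HPhi y i j eps He) as [N HN]. exists N.
      intros n Hn. apply HN. lia.
    + intros n y _. induction n.
      * change (derivable_pt_lim (fun y => P O y i j + P 1%nat y i j) y (mmul (K y) (P O y) i j)).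
        replace (mmul (K y) (P O y) i j) with (0 + mmul (K y) (P O y) i j) by ring.
        apply (derivable_pt_lim_plus (fun y => P O y i j) (fun y => P 1%nat y i j)).
        -- apply (derivable_pt_lim_const (mI i j)).
        -- apply is_derive_Reals. apply PF.
      * change (derivable_pt_lim (fun y => sum_f_R0 (fun k => P k y i j) (S n) + P (S (S n)) y i j) y
                  (mmul (K y) (fun i j => sum_f_R0 (fun k => P k y i j) (S n)) i j)).
        replace (mmul (K y) (fun i j => sum_f_R0 (fun k => P k y i j) (S n)) i j)
          with (mmul (K y) (fun i j => sum_f_R0 (fun k => P k y i j) n) i j + mmul (K y) (P (S n) y) i j)
          by (unfold mmul; simpl; ring).
        apply (derivable_pt_lim_plus (fun y => sum_f_R0 (fun k => P k y i j) (S n))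
                                     (fun y => P (S (S n)) y i j)); auto.
        apply is_derive_Reals. apply PF.
    + unfold Boule. simpl. rewrite Rminus_diag, Rabs_R0. lra.
Qed.

Lemma L_cont (U : Vec -> Prop) (v : Vec -> R -> Vec) (Jv : Vec -> R -> Mat)
  (t0 t1 : R) (x : R -> Vec)
  (Hsmooth : forall i, smooth_on U (fun y s => v y s i))
  (HJv : forall y s, U y -> forall i j,
           derivable_pt_lim (fun h => v (vshift y j h) s i) 0 (Jv y s i j))
  (HxU : forall t, inI t0 t1 t -> U (x t))
  (Hx : forall t, inI t0 t1 t -> forall i,
          deriv_in t0 t1 (fun s => x s i) t (v (x t) t i)) :
  forall t, inI t0 t1 t -> forall i j, cont_in t0 t1 (fun s => Jv (x s) s i j) t.
Proof.
  intros t Ht i j.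
  destruct (Hsmooth i) as [_ Hp].
  destruct (Hp (Some j)) as [g [Hg Hgs]].
  destruct Hgs as [Hgc _].
  assert (E : forall y s, U y -> Jv y s i j = g y s).
  { intros y s Hy. eapply uniqueness_limite; [apply HJv; auto|]. apply (Hg y s Hy). }
  intros eps He.
  destruct (Hgc (x t) t (HxU t Ht) eps He) as [d [Hd Hc]].
  assert (Hxc : forall k, exists dk, 0 < dk /\ forall s, inI t0 t1 s -> Rabs (s - t) < dk ->
             Rabs (x s k - x t k) < d).
  { intros k. eapply din_cont; [apply (Hx t Ht k)|auto]. }
  destruct (Hxc i0) as [d0 [Hd0 H0]]. destruct (Hxc i1) as [d1 [Hd1 H1]].
  destruct (Hxc i2) as [d2 [Hd2 H2]].
  set (dd := Rmin d (Rmin d0 (Rmin d1 d2))).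
  assert (dd <= d) by apply Rmin_l.
  assert (dd <= d0) by (eapply Rle_trans; [apply Rmin_r|apply Rmin_l]).
  assert (dd <= d1) by (eapply Rle_trans; [apply Rmin_r|eapply Rle_trans; [apply Rmin_r|apply Rmin_l]]).
  assert (dd <= d2) by (eapply Rle_trans; [apply Rmin_r|eapply Rle_trans; [apply Rmin_r|apply Rmin_r]]).
  exists dd. split.
  { unfold dd; repeat apply Rmin_glb_lt; auto. }
  intros s Hs Hst. rewrite !E by auto. apply Hc; auto.
  - intros k; destruct k; [apply H0|apply H1|apply H2]; auto; lra.
  - lra.
Qed.

Lemma clamp_clamp t0 t1 s : t0 <= t1 -> clamp t0 t1 (clamp t0 t1 s) = clamp t0 t1 s.
Proof. intros H. apply clamp_id, clamp_in; auto. Qed.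

Definition mcont (K : R -> Mat) := forall s i j, continuous (fun u => K u i j) s.

Lemma cabs (f : R -> R) s : continuous f s -> continuous (fun u => Rabs (f u)) s.
Proof. intros H. apply continuous_Rabs_comp; auto. Qed.

Lemma copp (f : R -> R) s : continuous f s -> continuous (fun u => - f u) s.
Proof.
  intros Hf. apply continuity_pt_filterlim. apply (continuity_pt_opp f).
  apply continuity_pt_filterlim; auto.
Qed.

Lemma glob_bound t0 t1 K : t0 <= t1 -> mcont K -> (forall s, K s = K (clamp t0 t1 s)) ->
  exists C, forall s i j, Rabs (K s i j) <= C.
Proof.
  intros Hle Hc Hk.
  set (f := fun s => Rabs (K s i0 i0) + Rabs (K s i0 i1) + Rabs (K s i0 i2) +
                     Rabs (K s i1 i0) + Rabs (K s i1 i1) + Rabs (K s i1 i2) +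
                     Rabs (K s i2 i0) + Rabs (K s i2 i1) + Rabs (K s i2 i2)).
  destruct (continuity_ab_maj f t0 t1 Hle) as [Mx [HM _]].
  { intros c _. apply continuity_pt_filterlim. change (continuous f c). unfold f.
    repeat apply cplus; apply cabs; apply Hc. }
  exists (f Mx). intros s i j.
  assert (Hf : f (clamp t0 t1 s) <= f Mx) by (apply HM; apply clamp_in; auto).
  unfold f in Hf. rewrite <- Hk in Hf.
  pose proof (Rabs_pos (K s i0 i0)); pose proof (Rabs_pos (K s i0 i1)); pose proof (Rabs_pos (K s i0 i2));
  pose proof (Rabs_pos (K s i1 i0)); pose proof (Rabs_pos (K s i1 i1)); pose proof (Rabs_pos (K s i1 i2));
  pose proof (Rabs_pos (K s i2 i0)); pose proof (Rabs_pos (K s i2 i1)); pose proof (Rabs_pos (K s i2 i2)).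
  destruct i, j; unfold f; lra.
Qed.

Lemma mcont_spin K : mcont K -> mcont (fun s => spin (K s)).
Proof.
  intros H s i j. unfold spin, mscal, madd, mopp, mtr.
  apply cmult; [apply continuous_const|]. apply cplus; [apply H|apply copp, H].
Qed.
Lemma mcont_opptr K : mcont K -> mcont (fun s => mopp (mtr (K s))).
Proof. intros H s i j. unfold mopp, mtr. apply copp, H. Qed.

Lemma orth_bound Q : mmul (mtr Q) Q = mI -> forall i j, Rabs (Q i j) <= 1.
Proof.
  intros H i j. apply (f_equal (fun A => A j j)) in H. unfold mmul, mtr, mI in H.
  assert (E : I3_eqb j j = true) by (destruct j; reflexivity). rewrite E in H.
  assert (Q i j * Q i j <= 1) by (destruct i; pose proof (Rle_0_sqr (Q i0 j));
    pose proof (Rle_0_sqr (Q i1 j)); pose proof (Rle_0_sqr (Q i2 j)); unfold Rsqr in *; lra).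
  unfold Rabs; destruct Rcase_abs; nra.
Qed.

Lemma spin_add X Y : spin (madd X Y) = madd (spin X) (spin Y).
Proof. apply mat_ext; intros i j; unfold spin, madd, mopp, mtr, mscal; ring. Qed.
Lemma spin_of_skew X : skew X -> spin X = X.
Proof.
  intros H. unfold skew in H. apply mat_ext; intros i j.
  apply (f_equal (fun A => A i j)) in H. unfold spin, madd, mopp, mtr, mscal in *. lra.
Qed.
Lemma spin_of_symm X : symm X -> spin X = mzero.
Proof.
  intros H. unfold symm in H. apply mat_ext; intros i j.
  apply (f_equal (fun A => A i j)) in H. unfold spin, madd, mopp, mtr, mscal, mzero in *. lra.
Qed.
Lemma strain_bound A C : (forall i j, Rabs (A i j) <= C) -> forall i j, Rabs (strain_rate A i j) <= C.
Proof.
  intros H i j. unfold strain_rate, mscal, madd, mtr.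
  pose proof (H i j); pose proof (H j i). rewrite Rabs_mult.
  rewrite (Rabs_right (1/2)) by lra.
  pose proof (Rabs_triang (A i j) (A j i)). lra.
Qed.
Lemma spin_bound A C : (forall i j, Rabs (A i j) <= C) -> forall i j, Rabs (spin A i j) <= C.
Proof.
  intros H i j. unfold spin, mscal, madd, mtr, mopp.
  pose proof (H i j); pose proof (H j i). rewrite Rabs_mult.
  rewrite (Rabs_right (1/2)) by lra.
  pose proof (Rabs_triang (A i j) (- A j i)). rewrite Rabs_Ropp in H2. lra.
Qed.
Lemma opptr_bound A C : (forall i j, Rabs (A i j) <= C) -> forall i j, Rabs (mopp (mtr A) i j) <= C.
Proof. intros H i j. unfold mopp, mtr. rewrite Rabs_Ropp. auto. Qed.

Record Setup (t0 t1 : R) (L Phi Psi Y : R -> Mat) (CL : R) : Prop := {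
  s_lt : t0 < t1;
  s_dPhi : forall s, inI t0 t1 s -> mdin t0 t1 Phi s (mmul (spin (L s)) (Phi s));
  s_dPsi : forall s, inI t0 t1 s -> mdin t0 t1 Psi s (mmul (L s) (Psi s));
  s_dY : forall s, inI t0 t1 s -> mdin t0 t1 Y s (mmul (mopp (mtr (L s))) (Y s));
  s_orth : forall s, inI t0 t1 s -> mmul (mtr (Phi s)) (Phi s) = mI;
  s_orth2 : forall s, inI t0 t1 s -> mmul (Phi s) (mtr (Phi s)) = mI;
  s_YP : forall s, inI t0 t1 s -> mmul (mtr (Y s)) (Psi s) = mI;
  s_PY : forall s, inI t0 t1 s -> mmul (Psi s) (mtr (Y s)) = mI;
  s_Lc : mc1 t0 t1 L;
  s_Lb : forall s, inI t0 t1 s -> forall i j, Rabs (L s i j) <= CL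
}.

Definition Ofam (Phi : R -> Mat) : Fam := fun tau t => mmul (Phi t) (mtr (Phi tau)).
Definition Fhfam (Psi Y : R -> Mat) : Fam := fun tau t => mmul (Psi t) (mtr (Y tau)).
Definition Mfam Phi Psi Y : Fam := fun tau t => mmul (Ofam Phi t tau) (Fhfam Psi Y tau t).
Definition Nfam Phi Psi Y : Fam := fun tau t => mmul (Fhfam Psi Y tau t) (Ofam Phi t tau).

Lemma cancel_r A B X : mmul A B = mI -> mmul A (mmul B X) = X.
Proof. intros H. rewrite <- mmul_assoc, H, mmul_I_l. reflexivity. Qed.

Ltac entries := apply mat_ext; intros ?i ?j;
  unfold spin, strain_rate; unfold mmul, madd, mopp, mtr, mscal, mzero; cbv beta; field.

Lemma O_tr Phi a b : mtr (Ofam Phi a b) = Ofam Phi b a.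
Proof. unfold Ofam. rewrite mtr_mmul. reflexivity. Qed.

Lemma O_inv t0 t1 L Phi Psi Y CL (S : Setup t0 t1 L Phi Psi Y CL) a b :
  inI t0 t1 a -> inI t0 t1 b -> mmul (Ofam Phi a b) (Ofam Phi b a) = mI.
Proof.
  intros Ha Hb. unfold Ofam. rewrite mmul_assoc, (cancel_r _ _ _ (s_orth _ _ _ _ _ _ _ S a Ha)).
  apply (s_orth2 _ _ _ _ _ _ _ S b Hb).
Qed.

Lemma O_diag t0 t1 L Phi Psi Y CL (S : Setup t0 t1 L Phi Psi Y CL) a :
  inI t0 t1 a -> Ofam Phi a a = mI.
Proof. intros Ha. unfold Ofam. apply (s_orth2 _ _ _ _ _ _ _ S a Ha). Qed.

Lemma O_comp t0 t1 L Phi Psi Y CL (S : Setup t0 t1 L Phi Psi Y CL) a s b :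
  inI t0 t1 s -> Ofam Phi a b = mmul (Ofam Phi s b) (Ofam Phi a s).
Proof.
  intros Hs. unfold Ofam. rewrite !mmul_assoc, (cancel_r _ _ _ (s_orth _ _ _ _ _ _ _ S s Hs)).
  reflexivity.
Qed.

Lemma Fh_inv t0 t1 L Phi Psi Y CL (S : Setup t0 t1 L Phi Psi Y CL) a b :
  inI t0 t1 a -> inI t0 t1 b -> mmul (Fhfam Psi Y a b) (Fhfam Psi Y b a) = mI.
Proof.
  intros Ha Hb. unfold Fhfam. rewrite mmul_assoc, (cancel_r _ _ _ (s_YP _ _ _ _ _ _ _ S a Ha)).
  apply (s_PY _ _ _ _ _ _ _ S b Hb).
Qed.

Lemma MN_inv t0 t1 L Phi Psi Y CL (S : Setup t0 t1 L Phi Psi Y CL) a b :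
  inI t0 t1 a -> inI t0 t1 b -> is_inverse (Mfam Phi Psi Y a b) (Nfam Phi Psi Y b a).
Proof.
  intros Ha Hb. unfold Mfam, Nfam. split.
  - rewrite !mmul_assoc, <- (mmul_assoc (Fhfam Psi Y a b)), (Fh_inv _ _ _ _ _ _ _ S a b Ha Hb), mmul_I_l.
    apply (O_inv _ _ _ _ _ _ _ S); auto.
  - rewrite !mmul_assoc, <- (mmul_assoc (Ofam Phi a b)), (O_inv _ _ _ _ _ _ _ S a b Ha Hb), mmul_I_l.
    apply (Fh_inv _ _ _ _ _ _ _ S); auto.
Qed.

Lemma O_dt t0 t1 L Phi Psi Y CL (S : Setup t0 t1 L Phi Psi Y CL) a b :
  inI t0 t1 b -> mdin t0 t1 (Ofam Phi a) b (mmul (spin (L b)) (Ofam Phi a b)).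
Proof.
  intros Hb. unfold Ofam.
  eapply mdin_eql; [|apply (mdin_mul t0 t1 Phi (fun _ => mtr (Phi a)));
     [apply (s_dPhi _ _ _ _ _ _ _ S b Hb)|apply mdin_const]].
  entries.
Qed.

Lemma O_dtau t0 t1 L Phi Psi Y CL (S : Setup t0 t1 L Phi Psi Y CL) a b :
  inI t0 t1 a -> mdin t0 t1 (fun s => Ofam Phi s b) a (mopp (mmul (Ofam Phi a b) (spin (L a)))).
Proof.
  intros Ha. unfold Ofam.
  eapply mdin_eql; [|apply (mdin_mul t0 t1 (fun _ => Phi b) (fun s => mtr (Phi s)));
     [apply mdin_const|apply mdin_tr, (s_dPhi _ _ _ _ _ _ _ S a Ha)]].
  entries.
Qed.

Lemma Fh_dt t0 t1 L Phi Psi Y CL (S : Setup t0 t1 L Phi Psi Y CL) a b :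
  inI t0 t1 b -> mdin t0 t1 (Fhfam Psi Y a) b (mmul (L b) (Fhfam Psi Y a b)).
Proof.
  intros Hb. unfold Fhfam.
  eapply mdin_eql; [|apply (mdin_mul t0 t1 Psi (fun _ => mtr (Y a)));
     [apply (s_dPsi _ _ _ _ _ _ _ S b Hb)|apply mdin_const]].
  entries.
Qed.

Lemma Fh_dtau t0 t1 L Phi Psi Y CL (S : Setup t0 t1 L Phi Psi Y CL) a b :
  inI t0 t1 a -> mdin t0 t1 (fun s => Fhfam Psi Y s b) a (mopp (mmul (Fhfam Psi Y a b) (L a))).
Proof.
  intros Ha. unfold Fhfam.
  eapply mdin_eql; [|apply (mdin_mul t0 t1 (fun _ => Psi b) (fun s => mtr (Y s)));
     [apply mdin_const|apply mdin_tr, (s_dY _ _ _ _ _ _ _ S a Ha)]].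
  entries.
Qed.

Lemma M_dt t0 t1 L Phi Psi Y CL (S : Setup t0 t1 L Phi Psi Y CL) a b :
  inI t0 t1 a -> inI t0 t1 b ->
  mdin t0 t1 (Mfam Phi Psi Y a) b
    (mmul (mmul (mmul (Ofam Phi b a) (strain_rate (L b))) (Ofam Phi a b)) (Mfam Phi Psi Y a b)).
Proof.
  intros Ha Hb. unfold Mfam at 2.
  rewrite !mmul_assoc, (cancel_r _ _ _ (O_inv _ _ _ _ _ _ _ S a b Ha Hb)).
  unfold Mfam.
  eapply mdin_eql; [|apply (mdin_mul t0 t1 (fun s => Ofam Phi s a) (Fhfam Psi Y a));
     [apply (O_dtau _ _ _ _ _ _ _ S b a Hb)|apply (Fh_dt _ _ _ _ _ _ _ S a b Hb)]].
  entries.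
Qed.

Lemma NT_dtau t0 t1 L Phi Psi Y CL (S : Setup t0 t1 L Phi Psi Y CL) a b :
  inI t0 t1 a -> inI t0 t1 b ->
  mdin t0 t1 (fun s => mtr (Nfam Phi Psi Y s b)) a
    (mopp (mmul (mmul (mmul (Ofam Phi a b) (strain_rate (L a))) (Ofam Phi b a))
                (mtr (Nfam Phi Psi Y a b)))).
Proof.
  intros Ha Hb. unfold Nfam at 2. rewrite mtr_mmul, O_tr.
  rewrite !mmul_assoc, (cancel_r _ _ _ (O_inv _ _ _ _ _ _ _ S b a Hb Ha)).
  unfold Nfam.
  eapply mdin_eql; [|apply mdin_tr; apply (mdin_mul t0 t1 (fun s => Fhfam Psi Y s b) (Ofam Phi b));
     [apply (Fh_dtau _ _ _ _ _ _ _ S a b Ha)|apply (O_dt _ _ _ _ _ _ _ S b a Ha)]].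
  unfold Ofam. entries.
Qed.

Lemma mc1_Phi t0 t1 L Phi Psi Y CL (S : Setup t0 t1 L Phi Psi Y CL) : mc1 t0 t1 Phi.
Proof. eapply mc1_of_din. apply (s_dPhi _ _ _ _ _ _ _ S). Qed.
Lemma mc1_Psi t0 t1 L Phi Psi Y CL (S : Setup t0 t1 L Phi Psi Y CL) : mc1 t0 t1 Psi.
Proof. eapply mc1_of_din. apply (s_dPsi _ _ _ _ _ _ _ S). Qed.
Lemma mc1_Y t0 t1 L Phi Psi Y CL (S : Setup t0 t1 L Phi Psi Y CL) : mc1 t0 t1 Y.
Proof. eapply mc1_of_din. apply (s_dY _ _ _ _ _ _ _ S). Qed.

Lemma C1_Phi_t t0 t1 L Phi Psi Y CL (S : Setup t0 t1 L Phi Psi Y CL) :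
  C1_family t0 t1 (fun _ b => Phi b).
Proof.
  apply (C1_t t0 t1 Phi (fun s => mmul (spin (L s)) (Phi s))).
  - apply (s_dPhi _ _ _ _ _ _ _ S).
  - apply (mc2_mul t0 t1 (fun _ b => spin (L b)) (fun _ b => Phi b)).
    + apply (mc2_spin t0 t1 (fun _ b => L b)). apply (s_Lc _ _ _ _ _ _ _ S).
    + apply (mc1_Phi _ _ _ _ _ _ _ S).
Qed.
Lemma C1_Phi_tau t0 t1 L Phi Psi Y CL (S : Setup t0 t1 L Phi Psi Y CL) :
  C1_family t0 t1 (fun a _ => Phi a).
Proof.
  apply (C1_tau t0 t1 Phi (fun s => mmul (spin (L s)) (Phi s))).
  - apply (s_dPhi _ _ _ _ _ _ _ S).
  - apply (mc2_mul t0 t1 (fun _ b => spin (L b)) (fun _ b => Phi b)).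
    + apply (mc2_spin t0 t1 (fun _ b => L b)). apply (s_Lc _ _ _ _ _ _ _ S).
    + apply (mc1_Phi _ _ _ _ _ _ _ S).
Qed.
Lemma C1_Psi_t t0 t1 L Phi Psi Y CL (S : Setup t0 t1 L Phi Psi Y CL) :
  C1_family t0 t1 (fun _ b => Psi b).
Proof.
  apply (C1_t t0 t1 Psi (fun s => mmul (L s) (Psi s))).
  - apply (s_dPsi _ _ _ _ _ _ _ S).
  - apply (mc2_mul t0 t1 (fun _ b => L b) (fun _ b => Psi b)).
    + apply (s_Lc _ _ _ _ _ _ _ S).
    + apply (mc1_Psi _ _ _ _ _ _ _ S).
Qed.
Lemma C1_Y_tau t0 t1 L Phi Psi Y CL (S : Setup t0 t1 L Phi Psi Y CL) :
  C1_family t0 t1 (fun a _ => Y a).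
Proof.
  apply (C1_tau t0 t1 Y (fun s => mmul (mopp (mtr (L s))) (Y s))).
  - apply (s_dY _ _ _ _ _ _ _ S).
  - apply (mc2_mul t0 t1 (fun _ b => mopp (mtr (L b))) (fun _ b => Y b)).
    + apply (mc2_opp t0 t1 (fun _ b => mtr (L b))), (mc2_tr t0 t1 (fun _ b => L b)).
      apply (s_Lc _ _ _ _ _ _ _ S).
    + apply (mc1_Y _ _ _ _ _ _ _ S).
Qed.

Lemma C1_O t0 t1 L Phi Psi Y CL (S : Setup t0 t1 L Phi Psi Y CL) :
  C1_family t0 t1 (Ofam Phi).
Proof.
  unfold Ofam. apply (C1_mul t0 t1 (fun _ b => Phi b) (fun a _ => mtr (Phi a))).
  - apply (C1_Phi_t _ _ _ _ _ _ _ S).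
  - apply (C1_tr t0 t1 (fun a _ => Phi a)). apply (C1_Phi_tau _ _ _ _ _ _ _ S).
Qed.
Lemma C1_Ot t0 t1 L Phi Psi Y CL (S : Setup t0 t1 L Phi Psi Y CL) :
  C1_family t0 t1 (fun a b => Ofam Phi b a).
Proof.
  unfold Ofam. apply (C1_mul t0 t1 (fun a _ => Phi a) (fun _ b => mtr (Phi b))).
  - apply (C1_Phi_tau _ _ _ _ _ _ _ S).
  - apply (C1_tr t0 t1 (fun _ b => Phi b)). apply (C1_Phi_t _ _ _ _ _ _ _ S).
Qed.
Lemma C1_Fh t0 t1 L Phi Psi Y CL (S : Setup t0 t1 L Phi Psi Y CL) :
  C1_family t0 t1 (Fhfam Psi Y).
Proof.
  unfold Fhfam. apply (C1_mul t0 t1 (fun _ b => Psi b) (fun a _ => mtr (Y a))).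
  - apply (C1_Psi_t _ _ _ _ _ _ _ S).
  - apply (C1_tr t0 t1 (fun a _ => Y a)). apply (C1_Y_tau _ _ _ _ _ _ _ S).
Qed.
Lemma C1_M t0 t1 L Phi Psi Y CL (S : Setup t0 t1 L Phi Psi Y CL) :
  C1_family t0 t1 (Mfam Phi Psi Y).
Proof.
  unfold Mfam. apply (C1_mul t0 t1 (fun a b => Ofam Phi b a) (Fhfam Psi Y)).
  - apply (C1_Ot _ _ _ _ _ _ _ S).
  - apply (C1_Fh _ _ _ _ _ _ _ S).
Qed.
Lemma C1_N t0 t1 L Phi Psi Y CL (S : Setup t0 t1 L Phi Psi Y CL) :
  C1_family t0 t1 (Nfam Phi Psi Y).
Proof.
  unfold Nfam. apply (C1_mul t0 t1 (Fhfam Psi Y) (fun a b => Ofam Phi b a)).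
  - apply (C1_Fh _ _ _ _ _ _ _ S).
  - apply (C1_Ot _ _ _ _ _ _ _ S).
Qed.

Lemma diff_zero A B : madd A (mopp B) = mzero -> A = B.
Proof.
  intros H. apply mat_ext; intros i j. apply (f_equal (fun X => X i j)) in H.
  unfold madd, mopp, mzero in H. lra.
Qed.

Lemma madd_opp_self A : madd A (mopp A) = mzero.
Proof. apply mat_ext; intros i j; unfold madd, mopp, mzero; ring. Qed.

Lemma O_orth t0 t1 L Phi Psi Y CL (S : Setup t0 t1 L Phi Psi Y CL) a b :
  inI t0 t1 a -> inI t0 t1 b -> mmul (mtr (Ofam Phi a b)) (Ofam Phi a b) = mI.
Proof. intros Ha Hb. rewrite O_tr. apply (O_inv _ _ _ _ _ _ _ S); auto. Qed.

Lemma O_bound t0 t1 L Phi Psi Y CL (S : Setup t0 t1 L Phi Psi Y CL) a b :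
  inI t0 t1 a -> inI t0 t1 b -> forall i j, Rabs (Ofam Phi a b i j) <= 1.
Proof. intros Ha Hb. apply orth_bound. apply (O_orth _ _ _ _ _ _ _ S); auto. Qed.

Lemma ODO_bound t0 t1 L Phi Psi Y CL (S : Setup t0 t1 L Phi Psi Y CL) a b s :
  inI t0 t1 a -> inI t0 t1 b -> inI t0 t1 s -> forall i j,
  Rabs (mmul (mmul (Ofam Phi a b) (strain_rate (L s))) (Ofam Phi b a) i j) <= 3 * (3 * 1 * CL) * 1.
Proof.
  intros Ha Hb Hs i j. apply mmul_bound.
  - intros l. apply mmul_bound.
    + intros; apply (O_bound _ _ _ _ _ _ _ S); auto.
    + intros; apply strain_bound. apply (s_Lb _ _ _ _ _ _ _ S); auto.
  - intros; apply (O_bound _ _ _ _ _ _ _ S); auto.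
Qed.

Lemma O_uniq t0 t1 L Phi Psi Y CL (S : Setup t0 t1 L Phi Psi Y CL) O' :
  O_ode t0 t1 L O' -> fam_eq t0 t1 O' (Ofam Phi).
Proof.
  intros [H0 Hd] tau t Htau Ht. apply diff_zero.
  apply (uniq t0 t1 (fun s => spin (L s)) CL (fun s => madd (O' tau s) (mopp (Ofam Phi tau s))) tau);
    auto.
  - intros s Hs. apply spin_bound. apply (s_Lb _ _ _ _ _ _ _ S); auto.
  - intros s Hs. eapply mdin_eql; [|apply mdin_add; [apply Hd; auto|apply mdin_opp, (O_dt _ _ _ _ _ _ _ S); auto]].
    entries.
  - rewrite H0, (O_diag _ _ _ _ _ _ _ S) by auto. apply madd_opp_self.
Qed.

Lemma Fh_diag t0 t1 L Phi Psi Y CL (S : Setup t0 t1 L Phi Psi Y CL) a :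
  inI t0 t1 a -> Fhfam Psi Y a a = mI.
Proof. intros Ha. unfold Fhfam. apply (s_PY _ _ _ _ _ _ _ S); auto. Qed.

Lemma M_uniq t0 t1 L Phi Psi Y CL (S : Setup t0 t1 L Phi Psi Y CL) M' :
  M_ode t0 t1 L (Ofam Phi) M' -> fam_eq t0 t1 M' (Mfam Phi Psi Y).
Proof.
  intros [H0 Hd] tau t Htau Ht. apply diff_zero.
  apply (uniq t0 t1 (fun s => mmul (mmul (Ofam Phi s tau) (strain_rate (L s))) (Ofam Phi tau s))
           (3 * (3 * 1 * CL) * 1) (fun s => madd (M' tau s) (mopp (Mfam Phi Psi Y tau s))) tau); auto.
  - intros s Hs. apply (ODO_bound _ _ _ _ _ _ _ S); auto.
  - intros s Hs. eapply mdin_eql; [|apply mdin_add; [apply Hd; auto|apply mdin_opp, (M_dt _ _ _ _ _ _ _ S); auto]].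
    rewrite mmul_add_r, mmul_opp_r. reflexivity.
  - rewrite H0 by auto. unfold Mfam. rewrite (O_diag _ _ _ _ _ _ _ S), (Fh_diag _ _ _ _ _ _ _ S), mmul_I_l by auto.
    apply madd_opp_self.
Qed.

Lemma N_uniq t0 t1 L Phi Psi Y CL (S : Setup t0 t1 L Phi Psi Y CL) N' :
  N_ode t0 t1 L (Ofam Phi) N' -> fam_eq t0 t1 N' (Nfam Phi Psi Y).
Proof.
  intros [H0 Hd] tau t Htau Ht.
  assert (E : mtr (N' tau t) = mtr (Nfam Phi Psi Y tau t)).
  { apply diff_zero.
    apply (uniq t0 t1 (fun s => mopp (mmul (mmul (Ofam Phi s t) (strain_rate (L s))) (Ofam Phi t s)))
           (3 * (3 * 1 * CL) * 1) (fun s => madd (mtr (N' s t)) (mopp (mtr (Nfam Phi Psi Y s t)))) t); auto.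
    - intros s Hs i j. unfold mopp. rewrite Rabs_Ropp. apply (ODO_bound _ _ _ _ _ _ _ S); auto.
    - intros s Hs. eapply mdin_eql; [|apply mdin_add; [apply (Hd s t Hs Ht)|apply mdin_opp, (NT_dtau _ _ _ _ _ _ _ S); auto]].
      entries.
    - rewrite H0 by auto. unfold Nfam. rewrite (O_diag _ _ _ _ _ _ _ S), (Fh_diag _ _ _ _ _ _ _ S), mmul_I_l, mtr_I by auto.
      apply madd_opp_self. }
  rewrite <- (mtr_tr (N' tau t)), E. reflexivity.
Qed.

Lemma decomp_uniq t0 t1 L Phi Psi Y CL (S : Setup t0 t1 L Phi Psi Y CL) (F : Fam)
  (HF : forall tau t, inI t0 t1 tau -> inI t0 t1 t -> dt_is t0 t1 F tau t (mmul (L t) (F tau t)))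
  (HFr : forall tau t, inI t0 t1 tau -> inI t0 t1 t -> F tau t = Fhfam Psi Y tau t)
  O' M' N' : decomp t0 t1 F O' M' N' ->
  fam_eq t0 t1 O' (Ofam Phi) /\ fam_eq t0 t1 M' (Mfam Phi Psi Y) /\ fam_eq t0 t1 N' (Nfam Phi Psi Y).
Proof.
  intros [[_ [Od _]] [[_ Hrot] [[_ Hirr] [_ Hdec]]]].
  pose proof (s_lt _ _ _ _ _ _ _ S) as Hlt.
  assert (orth' : forall tau t, inI t0 t1 tau -> inI t0 t1 t -> mmul (mtr (O' tau t)) (O' tau t) = mI).
  { intros tau t Htau Ht.
    rewrite (const_of_zero t0 t1 (fun s => mmul (mtr (O' tau s)) (O' tau s)) tau); auto.
    - rewrite Od by auto. rewrite mtr_I, mmul_I_l. reflexivity.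
    - intros s Hs. destruct (Hrot tau s Htau Hs) as [A [Ti [HA [[HT1 HT2] Hsk]]]].
      eapply mdin_eql; [|apply (mdin_mul t0 t1 (fun s => mtr (O' tau s)) (O' tau)); [apply mdin_tr|]; exact HA].
      replace A with (mmul (mmul A Ti) (O' tau s)) by (rewrite mmul_assoc, HT2, mmul_I_r; reflexivity).
      unfold skew in Hsk. rewrite mtr_mmul, Hsk. generalize (mmul A Ti). intros Sk. entries. }
  assert (orth2' : forall tau t, inI t0 t1 tau -> inI t0 t1 t -> mmul (O' tau t) (mtr (O' tau t)) = mI).
  { intros; apply inv_comm, orth'; auto. }
  assert (Hode : O_ode t0 t1 L O').
  { split; [auto|]. intros tau t Htau Ht.
    destruct (Hrot tau t Htau Ht) as [A [Ti [HA [[HT1 HT2] Hsk]]]].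
    destruct (Hirr tau t Htau Ht) as [B [Mi [HB [[HM1 HM2] Hsym]]]].
    assert (ETi : Ti = mtr (O' tau t)).
    { rewrite <- (mmul_I_l Ti), <- (orth' tau t Htau Ht), mmul_assoc, HT1, mmul_I_r. reflexivity. }
    assert (E1 : mmul (L t) (F tau t) = madd (mmul A (M' tau t)) (mmul (O' tau t) B)).
    { eapply mdin_unique; [exact Hlt|exact Ht|apply HF; auto|].
      apply (mdin_ext t0 t1 (fun s => mmul (O' tau s) (M' tau s))); auto.
      - intros s Hs. symmetry. apply Hdec; auto.
      - apply (mdin_mul t0 t1 (O' tau) (M' tau)); auto. }
    assert (E2 : L t = madd (mmul A Ti) (mmul (mmul (O' tau t) (mmul B Mi)) (mtr (O' tau t)))).
    { transitivity (mmul (mmul (mmul (L t) (F tau t)) Mi) (mtr (O' tau t))).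
      - destruct (Hdec tau t Htau Ht) as [-> _].
        rewrite !mmul_assoc, (cancel_r _ _ _ HM1), orth2', mmul_I_r by auto. reflexivity.
      - rewrite E1, !mmul_add_l, !mmul_assoc, (cancel_r _ _ _ HM1), ETi. reflexivity. }
    assert (E3 : spin (L t) = mmul A Ti).
    { assert (Hs2 : symm (mmul (mmul (O' tau t) (mmul B Mi)) (mtr (O' tau t)))).
      { unfold symm in *. rewrite (mtr_mmul (mmul (O' tau t) (mmul B Mi))), mtr_tr,
          (mtr_mmul (O' tau t) (mmul B Mi)), Hsym, !mmul_assoc. reflexivity. }
      rewrite E2, spin_add, (spin_of_skew _ Hsk), (spin_of_symm _ Hs2), madd_0_r. reflexivity. }
    replace (mmul (spin (L t)) (O' tau t)) with A; auto.
    rewrite E3, mmul_assoc, HT2, mmul_I_r. reflexivity. }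
  pose proof (O_uniq _ _ _ _ _ _ _ S O' Hode) as EO.
  split; [exact EO|split].
  - intros tau t Htau Ht. destruct (Hdec tau t Htau Ht) as [E _].
    unfold Mfam. rewrite <- O_tr, <- (EO tau t Htau Ht), <- HFr, E by auto.
    rewrite <- mmul_assoc, orth', mmul_I_l by auto. reflexivity.
  - intros tau t Htau Ht. destruct (Hdec tau t Htau Ht) as [_ E].
    unfold Nfam. rewrite <- O_tr, <- (EO tau t Htau Ht), <- HFr, E by auto.
    rewrite mmul_assoc, orth2', mmul_I_r by auto. reflexivity.
Qed.

Lemma conj_det P Q X lam : mmul P Q = mI ->
  mdet (madd (mscal lam mI) (mopp (mmul (mmul P X) Q))) = mdet (madd (mscal lam mI) (mopp X)).
Proof.
  intros H.
  assert (E : madd (mscal lam mI) (mopp (mmul (mmul P X) Q)) =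
              mmul (mmul P (madd (mscal lam mI) (mopp X))) Q).
  { rewrite mmul_add_r, mmul_add_l, mmul_scal_r, mmul_I_r, mmul_scal_l, H.
    rewrite mmul_opp_r, mmul_opp_l. reflexivity. }
  rewrite E, !mdet_mul.
  assert (mdet P * mdet Q = 1) by (rewrite <- mdet_mul, H; apply mdet_I).
  transitivity (mdet (madd (mscal lam mI) (mopp X)) * (mdet P * mdet Q)); [ring|].
  rewrite H0; ring.
Qed.

Lemma main_given t0 t1 L Phi Psi Y CL (S : Setup t0 t1 L Phi Psi Y CL) (F : Fam)
  (HF : forall tau t, inI t0 t1 tau -> inI t0 t1 t -> dt_is t0 t1 F tau t (mmul (L t) (F tau t)))
  (HFr : forall tau t, inI t0 t1 tau -> inI t0 t1 t -> F tau t = Fhfam Psi Y tau t) :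
  exists O M N : Fam,
    decomp t0 t1 F O M N /\
    (forall O' M' N', decomp t0 t1 F O' M' N' ->
       fam_eq t0 t1 O' O /\ fam_eq t0 t1 M' M /\ fam_eq t0 t1 N' N) /\
    (forall tau t, inI t0 t1 tau -> inI t0 t1 t ->
       nonsingular (M tau t) /\ nonsingular (N tau t) /\
       is_inverse (M t tau) (N tau t) /\
       same_singular_values (M tau t) (F tau t) /\
       same_singular_values (N tau t) (F tau t) /\
       mmul (mtr (M tau t)) (M tau t) = mmul (mtr (F tau t)) (F tau t) /\
       mmul (N tau t) (mtr (N tau t)) = mmul (F tau t) (mtr (F tau t))) /\
    O_ode t0 t1 L O /\ M_ode t0 t1 L O M /\ N_ode t0 t1 L O N /\
    (forall O', O_ode t0 t1 L O' -> fam_eq t0 t1 O' O) /\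
    (forall M', M_ode t0 t1 L O M' -> fam_eq t0 t1 M' M) /\
    (forall N', N_ode t0 t1 L O N' -> fam_eq t0 t1 N' N).
Proof.
  exists (Ofam Phi), (Mfam Phi Psi Y), (Nfam Phi Psi Y).
  assert (MtM : forall tau t, inI t0 t1 tau -> inI t0 t1 t ->
     mmul (mtr (Mfam Phi Psi Y tau t)) (Mfam Phi Psi Y tau t) = mmul (mtr (F tau t)) (F tau t)).
  { intros tau t Htau Ht. unfold Mfam. rewrite HFr by auto.
    rewrite mtr_mmul, !mmul_assoc, <- (mmul_assoc (mtr (Ofam Phi t tau))), (O_orth _ _ _ _ _ _ _ S), mmul_I_l by auto.
    reflexivity. }
  split; [|split; [|split; [|split; [|split; [|split; [|split; [|split]]]]]]].
  -
    split; [|split; [|split; [|split]]].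
    + split; [apply (C1_O _ _ _ _ _ _ _ S)|split].
      * intros; apply (O_diag _ _ _ _ _ _ _ S); auto.
      * intros; apply (O_comp _ _ _ _ _ _ _ S); auto.
    + split; [apply (C1_O _ _ _ _ _ _ _ S)|].
      intros tau t Htau Ht. exists (mmul (spin (L t)) (Ofam Phi tau t)), (Ofam Phi t tau).
      split; [apply (O_dt _ _ _ _ _ _ _ S); auto|split].
      * split; apply (O_inv _ _ _ _ _ _ _ S); auto.
      * unfold skew. rewrite mmul_assoc, (O_inv _ _ _ _ _ _ _ S), mmul_I_r by auto. apply spin_skew.
    + split; [apply (C1_M _ _ _ _ _ _ _ S)|].
      intros tau t Htau Ht. eexists; exists (Nfam Phi Psi Y t tau).
      split; [apply (M_dt _ _ _ _ _ _ _ S); auto|split; [apply (MN_inv _ _ _ _ _ _ _ S); auto|]].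
      unfold symm. rewrite mmul_assoc, (proj1 (MN_inv _ _ _ _ _ _ _ S tau t Htau Ht)), mmul_I_r.
      rewrite !mtr_mmul, !O_tr, strain_symm, !mmul_assoc. reflexivity.
    + split; [apply C1_tr, (C1_N _ _ _ _ _ _ _ S)|].
      intros tau t Htau Ht. eexists; exists (mtr (Mfam Phi Psi Y t tau)).
      split; [apply (NT_dtau _ _ _ _ _ _ _ S); auto|split].
      * destruct (MN_inv _ _ _ _ _ _ _ S t tau Ht Htau) as [H1 H2]. unfold famT.
        split; rewrite <- mtr_mmul; [rewrite H1|rewrite H2]; apply mtr_I.
      * unfold symm, famT. rewrite mmul_opp_l, mmul_assoc, <- mtr_mmul,
          (proj1 (MN_inv _ _ _ _ _ _ _ S t tau Ht Htau)), mtr_I, mmul_I_r.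
        rewrite mtr_opp, !mtr_mmul, !O_tr, strain_symm, !mmul_assoc. reflexivity.
    + intros tau t Htau Ht. rewrite HFr by auto. unfold Mfam, Nfam. split.
      * rewrite (cancel_r _ _ _ (O_inv _ _ _ _ _ _ _ S tau t Htau Ht)). reflexivity.
      * rewrite mmul_assoc, (O_inv _ _ _ _ _ _ _ S t tau Ht Htau), mmul_I_r. reflexivity.
  - intros O' M' N' Hd. apply (decomp_uniq _ _ _ _ _ _ _ S F HF HFr); auto.
  - intros tau t Htau Ht.
    split; [exists (Nfam Phi Psi Y t tau); apply (MN_inv _ _ _ _ _ _ _ S); auto|].
    split; [exists (Mfam Phi Psi Y t tau); apply is_inverse_sym, (MN_inv _ _ _ _ _ _ _ S); auto|].
    split; [apply (MN_inv _ _ _ _ _ _ _ S); auto|].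
    split; [intros lam; rewrite MtM; auto|].
    split; [|split; [apply MtM; auto|]].
    + intros lam. rewrite HFr by auto. unfold Nfam.
      rewrite mtr_mmul, O_tr, !mmul_assoc.
      rewrite <- (mmul_assoc (mtr (Fhfam Psi Y tau t))), <- mmul_assoc.
      apply conj_det. apply (O_inv _ _ _ _ _ _ _ S); auto.
    + rewrite HFr by auto. unfold Nfam. rewrite mtr_mmul, O_tr, !mmul_assoc.
      rewrite <- (mmul_assoc (Ofam Phi t tau)), (O_inv _ _ _ _ _ _ _ S), mmul_I_l by auto. reflexivity.
  - split; [intros; apply (O_diag _ _ _ _ _ _ _ S); auto|].
    intros; apply (O_dt _ _ _ _ _ _ _ S); auto.
  - split.
    + intros tau Htau. unfold Mfam. rewrite (O_diag _ _ _ _ _ _ _ S), (Fh_diag _ _ _ _ _ _ _ S), mmul_I_l by auto.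
      reflexivity.
    + intros; apply (M_dt _ _ _ _ _ _ _ S); auto.
  - split.
    + intros t Ht. unfold Nfam. rewrite (O_diag _ _ _ _ _ _ _ S), (Fh_diag _ _ _ _ _ _ _ S), mmul_I_l, mtr_I by auto.
      reflexivity.
    + intros; apply (NT_dtau _ _ _ _ _ _ _ S); auto.
  - apply (O_uniq _ _ _ _ _ _ _ S).
  - apply (M_uniq _ _ _ _ _ _ _ S).
  - apply (N_uniq _ _ _ _ _ _ _ S).
Qed.

Theorem theorem2
  (U : Vec -> Prop) (v : Vec -> R -> Vec) (Jv : Vec -> R -> Mat)
  (t0 t1 : R) (x : R -> Vec) (F : Fam)
  (HU : open_vec U)
  (Hsmooth : forall i, smooth_on U (fun y s => v y s i))
  (HJv : forall y s, U y -> forall i j,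
           derivable_pt_lim (fun h => v (vshift y j h) s i) 0 (Jv y s i j))
  (Ht : t0 < t1)
  (HxU : forall t, inI t0 t1 t -> U (x t))
  (Hx : forall t, inI t0 t1 t -> forall i,
          deriv_in t0 t1 (fun s => x s i) t (v (x t) t i))
  (HF0 : forall tau, inI t0 t1 tau -> F tau tau = mI)
  (HF : forall tau t, inI t0 t1 tau -> inI t0 t1 t ->
          dt_is t0 t1 F tau t (mmul (Jv (x t) t) (F tau t))) :
  let L := fun t => Jv (x t) t in
  exists O M N : Fam,
    (* (i) existence and uniqueness of the decomposition *)
    decomp t0 t1 F O M N /\
    (forall O' M' N', decomp t0 t1 F O' M' N' ->
       fam_eq t0 t1 O' O /\ fam_eq t0 t1 M' M /\ fam_eq t0 t1 N' N) /\
    (* (ii) *)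
    (forall tau t, inI t0 t1 tau -> inI t0 t1 t ->
       nonsingular (M tau t) /\ nonsingular (N tau t) /\
       is_inverse (M t tau) (N tau t) /\
       same_singular_values (M tau t) (F tau t) /\
       same_singular_values (N tau t) (F tau t) /\
       mmul (mtr (M tau t)) (M tau t) = mmul (mtr (F tau t)) (F tau t) /\
       mmul (N tau t) (mtr (N tau t)) = mmul (F tau t) (mtr (F tau t))) /\
    (* (iii) the factors are the unique solutions of the ODEs *)
    O_ode t0 t1 L O /\ M_ode t0 t1 L O M /\ N_ode t0 t1 L O N /\
    (forall O', O_ode t0 t1 L O' -> fam_eq t0 t1 O' O) /\
    (forall M', M_ode t0 t1 L O M' -> fam_eq t0 t1 M' M) /\
    (forall N', N_ode t0 t1 L O N' -> fam_eq t0 t1 N' N).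
Proof.
  intros L.
  assert (Hle : t0 <= t1) by lra.
  assert (Hin0 : inI t0 t1 t0) by (unfold inI; lra).
  pose proof (L_cont U v Jv t0 t1 x Hsmooth HJv HxU Hx) as Lc.
  set (Lt := fun s => L (clamp t0 t1 s)).
  assert (Ltc : mcont Lt).
  { intros s i j. apply continuity_pt_filterlim.
    exact (cont_clamp t0 t1 (fun u => L u i j) Hle (fun s Hs => Lc s Hs i j) s). }
  assert (Ltk : forall s, Lt s = Lt (clamp t0 t1 s)).
  { intros s. unfold Lt. rewrite clamp_clamp; auto. }
  assert (Lt_eq : forall s, inI t0 t1 s -> Lt s = L s).
  { intros s Hs. unfold Lt. rewrite clamp_id; auto. }
  destruct (glob_bound t0 t1 Lt Hle Ltc Ltk) as [CL HCL].
  destruct (exist_sol (fun s => spin (Lt s)) CL t0 (mcont_spin _ Ltc)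
              (fun s => spin_bound _ _ (HCL s))) as [Phi [HP0 HPd]].
  destruct (exist_sol Lt CL t0 Ltc HCL) as [Psi [HS0 HSd]].
  destruct (exist_sol (fun s => mopp (mtr (Lt s))) CL t0 (mcont_opptr _ Ltc)
              (fun s => opptr_bound _ _ (HCL s))) as [Y [HY0 HYd]].
  assert (dPhi : forall s, inI t0 t1 s -> mdin t0 t1 Phi s (mmul (spin (L s)) (Phi s))).
  { intros s Hs i j. rewrite <- (Lt_eq s Hs). apply dpl_din, HPd. }
  assert (dPsi : forall s, inI t0 t1 s -> mdin t0 t1 Psi s (mmul (L s) (Psi s))).
  { intros s Hs i j. rewrite <- (Lt_eq s Hs). apply dpl_din, HSd. }
  assert (dY : forall s, inI t0 t1 s -> mdin t0 t1 Y s (mmul (mopp (mtr (L s))) (Y s))).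
  { intros s Hs i j. rewrite <- (Lt_eq s Hs). apply dpl_din, HYd. }
  assert (orth : forall s, inI t0 t1 s -> mmul (mtr (Phi s)) (Phi s) = mI).
  { intros s Hs.
    rewrite (const_of_zero t0 t1 (fun s => mmul (mtr (Phi s)) (Phi s)) t0); auto.
    - simpl. rewrite HP0, mtr_I, mmul_I_l. reflexivity.
    - intros u Hu. eapply mdin_eql; [|apply (mdin_mul t0 t1 (fun s => mtr (Phi s)) Phi);
        [apply mdin_tr|]; apply dPhi; auto].
      entries. }
  assert (orth2 : forall s, inI t0 t1 s -> mmul (Phi s) (mtr (Phi s)) = mI).
  { intros; apply inv_comm, orth; auto. }
  assert (YP : forall s, inI t0 t1 s -> mmul (mtr (Y s)) (Psi s) = mI).
  { intros s Hs.
    rewrite (const_of_zero t0 t1 (fun s => mmul (mtr (Y s)) (Psi s)) t0); auto.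
    - simpl. rewrite HY0, HS0, mtr_I, mmul_I_l. reflexivity.
    - intros u Hu. eapply mdin_eql; [|apply (mdin_mul t0 t1 (fun s => mtr (Y s)) Psi);
        [apply mdin_tr, dY; auto|apply dPsi; auto]].
      entries. }
  assert (PY : forall s, inI t0 t1 s -> mmul (Psi s) (mtr (Y s)) = mI).
  { intros; apply inv_comm, YP; auto. }
  assert (Lmc : mc1 t0 t1 L).
  { intros i j. apply (cont2_rgt t0 t1 (fun s => L s i j)). intros s Hs. apply Lc; auto. }
  assert (Lb : forall s, inI t0 t1 s -> forall i j, Rabs (L s i j) <= CL).
  { intros s Hs i j. rewrite <- (Lt_eq s Hs). apply HCL. }
  pose proof (Build_Setup t0 t1 L Phi Psi Y CL Ht dPhi dPsi dY orth orth2 YP PY Lmc Lb) as S.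
  assert (HFr : forall tau t, inI t0 t1 tau -> inI t0 t1 t -> F tau t = Fhfam Psi Y tau t).
  { intros tau t Htau Ht'. apply diff_zero.
    apply (uniq t0 t1 L CL (fun s => madd (F tau s) (mopp (Fhfam Psi Y tau s))) tau); auto.
    - intros s Hs. eapply mdin_eql; [|apply mdin_add; [apply (HF tau s Htau Hs)|
        apply mdin_opp, (Fh_dt _ _ _ _ _ _ _ S); auto]].
      unfold L. entries.
    - rewrite HF0, (Fh_diag _ _ _ _ _ _ _ S) by auto. apply madd_opp_self. }
  exact (main_given t0 t1 L Phi Psi Y CL S F HF HFr).
Qed.
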